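(* Let $\succcurlyeq$ be a preference relation on the set $\mathcal{B}$ of bets over a propositional language $\mathcal{L}$. The following are equivalent: (1) $\succcurlyeq$ satisfies Non-Triviality, Objective Expected Utility and Inclusion/Exclusion; (2) $\succcurlyeq$ is represented by a subjective model of uncertainty $(\Omega,t,\lambda)$ with $\lambda$ additive and $t$ exact and $\land$-distributive; (3) $\succcurlyeq$ is represented by a subjective model of uncertainty $(\Omega',t',\lambda')$ with $\lambda'$ totally monotone and $t'$ sound.
   Context: Let $\mathbb{P}$ be a set of propositional variables containing distinguished $\mathbf{T}$, $\mathbf{F}$, and $\mathcal{L}$ the language generated by $\neg,\land,\lor$; $\phi\implies\psi$ means $\psi$ is deducible from $\phi$ in classical propositional logic, $\phi\iff\psi$ means mutual deducibility. A bet is a finitely supported $b:\mathcal{L}\to[0,1]$ summing to $1$; $b_\phi$ is the point-mass bet on $\phi$; the set $\mathcal{B}$ of bets is a mixture space under pointwise mixtures, and $\{\alpha_1 b_{\phi_1},\dots\}$ denotes the bet with weight $\alpha_i$ on $\phi_i$. A truth valuation on $\Omega$ is $t:\mathcal{L}\to2^\Omega$ with $t(\mathbf{T})=\Omega,t(\mathbf{F})=\emptyset$; exact: $\phi\iff\psi\Rightarrow t(\phi)=t(\psi)$; monotone: $\phi\implies\psi\Rightarrow t(\phi)\subseteq t(\psi)$; symmetric: $t(\neg\phi)=\Omega\setminus t(\phi)$; $\land$-distributive: $t(\phi\land\psi)=t(\phi)\cap t(\psi)$; sound: all four. A likelihood appraisal on a field $\Sigma\subseteq2^\Omega$ is $\lambda:\Sigma\to[0,1]$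 with $\lambda(\emptyset)=0,\lambda(\Omega)=1$; additive if finitely additive; totally monotone if for all $A_1,\dots,A_n\in\Sigma$, $\lambda(\bigcup_i A_i)\ge\sum_{\emptyset\ne I\subseteq\{1,\dots,n\}}(-1)^{|I|+1}\lambda(\bigcap_{i\in I}A_i)$. A subjective model $(\Omega,t,\lambda)$ ($\lambda$ on a field containing $t(\mathcal{L})$) represents $\succcurlyeq$ if $b\succcurlyeq b'\iff\sum_\phi b(\phi)\lambda(t(\phi))\ge\sum_\phi b'(\phi)\lambda(t(\phi))$. Non-Triviality: $b_{\mathbf{T}}\succcurlyeq b_\phi\succcurlyeq b_{\mathbf{F}}$ for all $\phi$ and $b_{\mathbf{T}}\succ b_{\mathbf{F}}$. Objective Expected Utility: $\succcurlyeq$ is complete, transitive, Archimedean and satisfies Independence. Inclusion/Exclusion: for any $\phi_1,\dots,\phi_n$ and $\psi$ with $\phi_i\implies\psi$ for all $i$, with $E,O$ the collections of nonempty subsets of $\{1,\dots,n\}$ of even and odd cardinality, $\phi_I=\bigwedge_{i\in I}\phi_i$, $m=\max\{|E|+1,|O|\}$: $\{\tfrac1m b_\psi,\ \tfrac1m b_{\phi_I}\ (I\in E),\ (1-\tfrac{|E|+1}{m})b_{\mathbf{F}}\}\succcurlyeq\{\tfrac1m b_{\phi_I}\ (I\in O),\ (1-\tfrac{|O|}{m})b_{\mathbf{F}}\}$. *)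

(* Defs.v *)
From Stdlib Require Import Bool Reals Lra List Arith ClassicalEpsilon.
Import ListNotations.
Open Scope R_scope.

Inductive form (P : Type) : Type :=
| Var : P -> form P
| Neg : form P -> form P
| And : form P -> form P -> form P
| Or  : form P -> form P -> form P.
Arguments Var {P} _.
Arguments Neg {P} _.
Arguments And {P} _ _.
Arguments Or  {P} _ _.

Fixpoint feval {P : Type} (v : P -> bool) (f : form P) : bool :=
  match f with
  | Var p => v p
  | Neg g => negb (feval v g)
  | And g h => feval v g && feval v h
  | Or g h => feval v g || feval v h
  end.

(* phi ==> psi : psi is deducible from phi in classical propositional logic,
   where the distinguished variables T and F are the constants true / false.
   By soundness and completeness this is the semantic consequence relation. *)
Definition deduces {P : Type} (PT PF : P) (phi psi : form P) : Prop :=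
  forall v : P -> bool, v PT = true -> v PF = false ->
    feval v phi = true -> feval v psi = true.

Definition equiv {P : Type} (PT PF : P) (phi psi : form P) : Prop :=
  deduces PT PF phi psi /\ deduces PT PF psi phi.

Definition sum_list (l : list R) : R := fold_right Rplus 0 l.

Fixpoint subsets (l : list nat) : list (list nat) :=
  match l with
  | [] => [[]]
  | x :: l' => subsets l' ++ map (cons x) (subsets l')
  end.

Definition nonempty_subsets (n : nat) : list (list nat) :=
  filter (fun I => Nat.ltb 0 (length I)) (subsets (seq 0 n)).
Definition even_subsets (n : nat) : list (list nat) :=
  filter (fun I => andb (Nat.ltb 0 (length I)) (Nat.even (length I))) (subsets (seq 0 n)).
Definition odd_subsets (n : nat) : list (list nat) :=
  filter (fun I => Nat.odd (length I)) (subsets (seq 0 n)).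

(* phi_I = /\_{i in I} phi_i  (I nonempty; the empty case is never used). *)
Fixpoint bigand {P : Type} (PT : P) (phi : nat -> form P) (I : list nat) : form P :=
  match I with
  | [] => Var PT
  | [i] => phi i
  | i :: I' => And (phi i) (bigand PT phi I')
  end.

Definition fsupp {P : Type} (b : form P -> R) (s : list (form P)) : Prop :=
  NoDup s /\ forall phi, b phi <> 0 -> In phi s.

Definition is_bet {P : Type} (b : form P -> R) : Prop :=
  (forall phi, 0 <= b phi <= 1) /\
  exists s, fsupp b s /\ sum_list (map b s) = 1.

Definition pm {P : Type} (phi : form P) : form P -> R :=
  fun psi => if excluded_middle_informative (psi = phi) then 1 else 0.

Definition mix {P : Type} (a : R) (b b' : form P -> R) : form P -> R :=
  fun phi => a * b phi + (1 - a) * b' phi.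

Definition wbet {P : Type} (l : list (R * form P)) : form P -> R :=
  fun psi => sum_list (map (fun p => fst p * pm (snd p) psi) l).

Section Prefs.
Context {P : Type} (PT PF : P) (pref : (form P -> R) -> (form P -> R) -> Prop).

Definition spref (b b' : form P -> R) : Prop := pref b b' /\ ~ pref b' b.

Definition NonTriviality : Prop :=
  (forall phi, pref (pm (Var PT)) (pm phi) /\ pref (pm phi) (pm (Var PF))) /\
  spref (pm (Var PT)) (pm (Var PF)).

Definition Complete : Prop :=
  forall b b', is_bet b -> is_bet b' -> pref b b' \/ pref b' b.

Definition Transitive : Prop :=
  forall b b' b'', is_bet b -> is_bet b' -> is_bet b'' ->
    pref b b' -> pref b' b'' -> pref b b''.

Definition Archimedean : Prop :=
  forall b b' b'', is_bet b -> is_bet b' -> is_bet b'' ->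
    spref b b' -> spref b' b'' ->
    exists a c, 0 < a < 1 /\ 0 < c < 1 /\
      spref (mix a b b'') b' /\ spref b' (mix c b b'').

Definition Independence : Prop :=
  forall b b' b'' a, is_bet b -> is_bet b' -> is_bet b'' -> 0 < a < 1 ->
    (pref b b' <-> pref (mix a b b'') (mix a b' b'')).

Definition ObjectiveEU : Prop :=
  Complete /\ Transitive /\ Archimedean /\ Independence.

Definition InclusionExclusion : Prop :=
  forall (n : nat) (phi : nat -> form P) (psi : form P),
    (forall i, (i < n)%nat -> deduces PT PF (phi i) psi) ->
    let Ev := even_subsets n in
    let Od := odd_subsets n in
    let m := INR (Nat.max (length Ev + 1) (length Od)) in
    pref
      (wbet ((1 / m, psi) :: map (fun I => (1 / m, bigand PT phi I)) Ev
              ++ [(1 - INR (length Ev + 1) / m, Var PF)]))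
      (wbet (map (fun I => (1 / m, bigand PT phi I)) Od
              ++ [(1 - INR (length Od) / m, Var PF)])).
End Prefs.

Section Models.
Context {P : Type} (PT PF : P) {Omega : Type}.

Definition truth_valuation (t : form P -> Omega -> Prop) : Prop :=
  t (Var PT) = (fun _ => True) /\ t (Var PF) = (fun _ => False).

Definition exact (t : form P -> Omega -> Prop) : Prop :=
  forall phi psi, equiv PT PF phi psi -> t phi = t psi.
Definition monotone (t : form P -> Omega -> Prop) : Prop :=
  forall phi psi, deduces PT PF phi psi -> forall w, t phi w -> t psi w.
Definition symmetric (t : form P -> Omega -> Prop) : Prop :=
  forall phi, t (Neg phi) = (fun w => ~ t phi w).
Definition and_distributive (t : form P -> Omega -> Prop) : Prop :=
  forall phi psi, t (And phi psi) = (fun w => t phi w /\ t psi w).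
Definition sound (t : form P -> Omega -> Prop) : Prop :=
  exact t /\ monotone t /\ symmetric t /\ and_distributive t.

Definition is_field (Sigma : (Omega -> Prop) -> Prop) : Prop :=
  Sigma (fun _ => False) /\
  (forall A, Sigma A -> Sigma (fun w => ~ A w)) /\
  (forall A B, Sigma A -> Sigma B -> Sigma (fun w => A w \/ B w)).

(* likelihood appraisal on Sigma (lam is only relevant on Sigma) *)
Definition appraisal (Sigma : (Omega -> Prop) -> Prop) (lam : (Omega -> Prop) -> R) : Prop :=
  (forall A, Sigma A -> 0 <= lam A <= 1) /\
  lam (fun _ => False) = 0 /\ lam (fun _ => True) = 1.

Definition additive (Sigma : (Omega -> Prop) -> Prop) (lam : (Omega -> Prop) -> R) : Prop :=
  forall A B, Sigma A -> Sigma B -> (forall w, A w -> B w -> False) ->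
    lam (fun w => A w \/ B w) = lam A + lam B.

Definition totally_monotone (Sigma : (Omega -> Prop) -> Prop) (lam : (Omega -> Prop) -> R) : Prop :=
  forall (n : nat) (A : nat -> Omega -> Prop),
    (forall i, (i < n)%nat -> Sigma (A i)) ->
    lam (fun w => exists i, (i < n)%nat /\ A i w) >=
    sum_list (map (fun I => (-1) ^ (length I + 1) *
                            lam (fun w => forall i, In i I -> A i w))
                  (nonempty_subsets n)).

Definition bet_value (b : form P -> R) (U : form P -> R) (v : R) : Prop :=
  exists s, fsupp b s /\ v = sum_list (map (fun phi => b phi * U phi) s).

Definition represents (pref : (form P -> R) -> (form P -> R) -> Prop)
    (t : form P -> Omega -> Prop) (lam : (Omega -> Prop) -> R) : Prop :=
  forall b b', is_bet b -> is_bet b' ->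
    (pref b b' <->
     forall v v', bet_value b (fun phi => lam (t phi)) v ->
                  bet_value b' (fun phi => lam (t phi)) v' -> v >= v').

Definition subjective_model (Sigma : (Omega -> Prop) -> Prop)
    (t : form P -> Omega -> Prop) (lam : (Omega -> Prop) -> R) : Prop :=
  truth_valuation t /\ is_field Sigma /\ (forall phi, Sigma (t phi)) /\
  appraisal Sigma lam.
End Models.

(* Main.v *)
Require Import Defs.
From Stdlib Require Import Reals Lra Lia List Permutation Classical ClassicalEpsilon FunctionalExtensionality PropExtensionality Bool.
Import ListNotations.
Open Scope R_scope.

Section Infra.
Context {P : Type}.
Notation fm := (form P).
Implicit Types (b : fm -> R) (phi psi : fm) (U : fm -> R).

Definition fdec (x y : fm) : {x = y} + {x <> y} := excluded_middle_informative (x = y).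

Definition sumf {A : Type} (s : list A) (g : A -> R) : R := sum_list (map g s).

Lemma sum_list_app (l1 l2 : list R) : sum_list (l1 ++ l2) = sum_list l1 + sum_list l2.
Proof. induction l1; simpl; [lra|rewrite IHl1; lra]. Qed.

Lemma sumf_app {A} (s1 s2 : list A) g : sumf (s1 ++ s2) g = sumf s1 g + sumf s2 g.
Proof. unfold sumf. rewrite map_app, sum_list_app. auto. Qed.

Lemma sumf_cons {A} (x : A) s g : sumf (x :: s) g = g x + sumf s g.
Proof. reflexivity. Qed.

Lemma sumf_nil {A} (g : A -> R) : sumf [] g = 0.
Proof. reflexivity. Qed.

Lemma sumf_plus {A} (s : list A) f g : sumf s (fun x => f x + g x) = sumf s f + sumf s g.
Proof. induction s; simpl; unfold sumf in *; simpl; [lra|rewrite IHs; lra]. Qed.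

Lemma sumf_minus {A} (s : list A) f g : sumf s (fun x => f x - g x) = sumf s f - sumf s g.
Proof. induction s; simpl; unfold sumf in *; simpl; [lra|rewrite IHs; lra]. Qed.

Lemma sumf_scal {A} (s : list A) c f : sumf s (fun x => c * f x) = c * sumf s f.
Proof. induction s; simpl; unfold sumf in *; simpl; [lra|rewrite IHs; lra]. Qed.

Lemma sumf_ext {A} (s : list A) f g : (forall x, In x s -> f x = g x) -> sumf s f = sumf s g.
Proof.
  induction s; intros H; unfold sumf in *; simpl; auto.
  rewrite H by (left; auto). rewrite IHs; auto. intros; apply H; right; auto.
Qed.

Lemma sumf_const {A} (s : list A) c : sumf s (fun _ => c) = INR (length s) * c.
Proof. induction s; unfold sumf in *; simpl; [lra|]. rewrite IHs. destruct (length s); simpl; lra. Qed.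

Lemma sumf_map {A B} (s : list A) (h : A -> B) g : sumf (map h s) g = sumf s (fun x => g (h x)).
Proof. unfold sumf. rewrite map_map. auto. Qed.

Lemma sumf_nonneg {A} (s : list A) f : (forall x, In x s -> 0 <= f x) -> 0 <= sumf s f.
Proof.
  induction s; intros H; unfold sumf in *; simpl; [lra|].
  assert (0 <= f a) by (apply H; left; auto).
  assert (0 <= sum_list (map f s)) by (apply IHs; intros; apply H; right; auto). lra.
Qed.

Lemma sumf_le {A} (s : list A) f g : (forall x, In x s -> f x <= g x) -> sumf s f <= sumf s g.
Proof.
  intros H. assert (0 <= sumf s (fun x => g x - f x)) by (apply sumf_nonneg; intros; specialize (H x H0); lra).
  rewrite sumf_minus in H0. lra.
Qed.

Lemma sumf_perm {A} (s1 s2 : list A) g : Permutation s1 s2 -> sumf s1 g = sumf s2 g.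
Proof.
  induction 1; unfold sumf in *; simpl; auto; try lra.
Qed.

Definition nzb {A} (f : A -> R) (x : A) : bool := if Req_dec_T (f x) 0 then false else true.

Lemma sumf_filter_nz {A} (s : list A) f : sumf s f = sumf (filter (nzb f) s) f.
Proof.
  induction s; auto. simpl. unfold nzb at 1. destruct (Req_dec_T (f a) 0).
  - rewrite sumf_cons, e, IHs. lra.
  - rewrite !sumf_cons, IHs. auto.
Qed.

Lemma sumf_indep {A} (s1 s2 : list A) f :
  NoDup s1 -> NoDup s2 -> (forall x, f x <> 0 -> In x s1) -> (forall x, f x <> 0 -> In x s2) ->
  sumf s1 f = sumf s2 f.
Proof.
  intros N1 N2 H1 H2. rewrite (sumf_filter_nz s1), (sumf_filter_nz s2).
  apply sumf_perm, NoDup_Permutation; try apply NoDup_filter; auto.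
  intros x; rewrite !filter_In; unfold nzb; destruct (Req_dec_T (f x) 0); split; intros [? ?]; try discriminate;
  split; auto.
Qed.

Lemma common_list (s1 s2 : list fm) : exists s, NoDup s /\ (forall x, In x s1 -> In x s) /\ (forall x, In x s2 -> In x s).
Proof.
  exists (nodup fdec (s1 ++ s2)). split; [apply NoDup_nodup|]. split; intros x Hx; apply nodup_In, in_or_app; auto.
Qed.

Lemma sumf_zero_each {A} (s : list A) f : (forall x, In x s -> 0 <= f x) -> sumf s f = 0 -> forall x, In x s -> f x = 0.
Proof.
  induction s; intros H0 H x Hx; [destruct Hx|]. rewrite sumf_cons in H.
  assert (0 <= f a) by (apply H0; left; auto).
  assert (0 <= sumf s f) by (apply sumf_nonneg; intros; apply H0; right; auto).
  destruct Hx as [<-|Hx]; [lra|]. apply IHs; auto; [intros; apply H0; right; auto| lra].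
Qed.

Lemma sumf_ge_elem {A} (s : list A) f x : (forall x, In x s -> 0 <= f x) -> In x s -> f x <= sumf s f.
Proof.
  induction s; intros H Hx; [destruct Hx|]. rewrite sumf_cons.
  assert (0 <= f a) by (apply H; left; auto).
  assert (0 <= sumf s f) by (apply sumf_nonneg; intros; apply H; right; auto).
  destruct Hx as [<-|Hx]; [lra|]. assert (f x <= sumf s f) by (apply IHs; auto; intros; apply H; right; auto). lra.
Qed.

Lemma pm_eq (phi : fm) : pm phi phi = 1.
Proof. unfold pm. destruct (excluded_middle_informative (phi = phi)); tauto. Qed.
Lemma pm_neq (phi psi : fm) : psi <> phi -> pm phi psi = 0.
Proof. unfold pm. destruct (excluded_middle_informative (psi = phi)); tauto. Qed.

Lemma sumf_pm (s : list fm) phi g : NoDup s -> In phi s -> sumf s (fun x => pm phi x * g x) = g phi.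
Proof.
  induction s; intros N H; [destruct H|]. apply NoDup_cons_iff in N as [N1 N2]. rewrite sumf_cons.
  destruct H as [<-|H].
  - rewrite pm_eq. rewrite (sumf_ext _ _ (fun _ => 0)). rewrite sumf_const. lra.
    intros x Hx. rewrite pm_neq; [lra|]. intros ->; auto.
  - rewrite pm_neq by (intros ->; auto). rewrite IHs; auto. lra.
Qed.

Definition Vs (U : fm -> R) (b : fm -> R) (s : list fm) := sumf s (fun phi => b phi * U phi).

Lemma Vs_indep U b (s1 s2 : list fm) : fsupp b s1 -> fsupp b s2 -> Vs U b s1 = Vs U b s2.
Proof.
  intros [N1 H1] [N2 H2]. apply sumf_indep; auto; intros x Hx; [apply H1|apply H2];
  intros E; apply Hx; rewrite E; lra.
Qed.

Definition Val (U : fm -> R) (b : fm -> R) : R :=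
  match excluded_middle_informative (exists s, fsupp b s) with
  | left h => Vs U b (proj1_sig (constructive_indefinite_description _ h))
  | right _ => 0 end.

Lemma Val_spec U b (s : list fm) : fsupp b s -> Val U b = Vs U b s.
Proof.
  intros H. unfold Val. destruct (excluded_middle_informative _) as [h|h]; [|exfalso; eauto].
  destruct (constructive_indefinite_description _ h) as [s' Hs']. simpl. apply Vs_indep; auto.
Qed.

Lemma fsupp_sub b (s s' : list fm) : fsupp b s -> NoDup s' -> (forall x, In x s -> In x s') -> fsupp b s'.
Proof. intros [_ H] N S. split; auto. Qed.

Lemma bet_sum b (s : list fm) : is_bet b -> fsupp b s -> sumf s b = 1.
Proof.
  intros [_ [s' [H' E]]] H. rewrite <- E. fold (sumf s' b).
  pose proof (Vs_indep (fun _ => 1) b s s' H H'). unfold Vs in H0.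
  rewrite (sumf_ext s b (fun phi => b phi * 1)), (sumf_ext s' b (fun phi => b phi * 1)); auto; intros; lra.
Qed.

Lemma bet_fsupp b : is_bet b -> exists s, fsupp b s.
Proof. intros [_ [s [H _]]]; eauto. Qed.

Lemma pm_bet phi : is_bet (pm phi).
Proof.
  split. intros psi. unfold pm. destruct (excluded_middle_informative _); lra.
  exists [phi]. split. split. constructor; [intros []|constructor].
  intros psi H. unfold pm in H. destruct (excluded_middle_informative _); [left; auto| lra].
  simpl. rewrite pm_eq. lra.
Qed.

Lemma pm_fsupp phi (s : list fm) : NoDup s -> In phi s -> fsupp (pm phi) s.
Proof. intros N H. split; auto. intros psi Hp. unfold pm in Hp. destruct (excluded_middle_informative _); [subst; auto|lra]. Qed.

Lemma Val_pm U phi : Val U (pm phi) = U phi.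
Proof.
  rewrite (Val_spec _ _ [phi]). unfold Vs. rewrite sumf_cons, sumf_nil, pm_eq. lra.
  apply pm_fsupp; [constructor; [intros []|constructor]|left; auto].
Qed.

Lemma mix_fsupp a b (c : fm -> R) (s : list fm) : fsupp b s -> fsupp c s -> fsupp (mix a b c) s.
Proof.
  intros [N Hb] [_ Hc]. split; auto. intros x Hx. unfold mix in Hx.
  destruct (Req_dec_T (b x) 0) as [E|E]; [|auto]. rewrite E in Hx.
  destruct (Req_dec_T (c x) 0) as [E'|E']; [|auto]. rewrite E' in Hx. lra.
Qed.

Lemma common_supp b (c : fm -> R) : is_bet b -> is_bet c -> exists s, fsupp b s /\ fsupp c s.
Proof.
  intros Hb Hc. destruct (bet_fsupp b Hb) as [s1 H1]. destruct (bet_fsupp c Hc) as [s2 H2].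
  destruct (common_list s1 s2) as [s [N [S1 S2]]]. exists s. split; eapply fsupp_sub; eauto.
Qed.

Lemma mix_bet a b (c : fm -> R) : 0 <= a <= 1 -> is_bet b -> is_bet c -> is_bet (mix a b c).
Proof.
  intros Ha Hb Hc. destruct (common_supp b c Hb Hc) as [s [H1 H2]].
  split. intros phi. destruct Hb as [Hb _]. destruct Hc as [Hc _]. specialize (Hb phi). specialize (Hc phi).
  unfold mix. split; nra.
  exists s. split. apply mix_fsupp; auto. fold (sumf s (mix a b c)). unfold mix.
  rewrite sumf_plus, !sumf_scal, (bet_sum b s), (bet_sum c s); auto. lra.
Qed.

Lemma Val_mix U a b (c : fm -> R) : is_bet b -> is_bet c -> Val U (mix a b c) = a * Val U b + (1 - a) * Val U c.
Proof.
  intros Hb Hc. destruct (common_supp b c Hb Hc) as [s [H1 H2]].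
  rewrite !(Val_spec U _ s); auto; [|apply mix_fsupp; auto]. unfold Vs, mix.
  rewrite (sumf_ext _ _ (fun x => a * (b x * U x) + (1 - a) * (c x * U x))) by (intros; ring).
  rewrite sumf_plus, !sumf_scal. auto.
Qed.

Lemma bet_ind (Q : (fm -> R) -> Prop) :
  (forall phi, Q (pm phi)) ->
  (forall a b c, 0 < a < 1 -> is_bet b -> is_bet c -> Q b -> Q c -> Q (mix a b c)) ->
  forall b, is_bet b -> Q b.
Proof.
  intros Hpm Hmix b [Hb [s [[N Hs] Hsum]]]. fold (sumf s b) in Hsum. revert b Hb Hs Hsum.
  induction s as [|phi s IH]; intros b Hb Hs Hsum.
  { rewrite sumf_nil in Hsum. lra. }
  apply NoDup_cons_iff in N as [N1 N2]. rewrite sumf_cons in Hsum.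
  assert (Hnn : forall x, In x s -> 0 <= b x) by (intros; apply Hb).
  assert (Hs' : forall x, x <> phi -> b x <> 0 -> In x s) by (intros x Hx Hbx; destruct (Hs x Hbx); auto; congruence).
  destruct (Req_dec_T (b phi) 0) as [E0|E0].
  { apply IH; auto. intros x Hx. apply Hs'; auto. intros ->; auto. lra. }
  destruct (Req_dec_T (b phi) 1) as [E1|E1].
  { replace b with (pm phi). apply Hpm. apply functional_extensionality; intros x.
    destruct (fdec x phi) as [->|Hx]. rewrite pm_eq; auto. rewrite pm_neq; auto.
    destruct (Req_dec_T (b x) 0); auto. symmetry. apply (sumf_zero_each s b). exact Hnn. lra. apply Hs'; auto. }
  pose proof (Hb phi) as Hbp.
  assert (Hlt : 0 < b phi < 1) by lra.
  set (b' := fun x => if fdec x phi then 0 else b x / (1 - b phi)).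
  assert (Hb's : forall x, In x s -> b' x = b x / (1 - b phi)).
  { intros x Hx. unfold b'. destruct (fdec x phi); [subst; contradiction|auto]. }
  assert (Hsum' : sumf s b' = 1).
  { rewrite (sumf_ext _ _ (fun x => / (1 - b phi) * b x)) by (intros; rewrite Hb's; auto; unfold Rdiv; ring).
    rewrite sumf_scal. replace (sumf s b) with (1 - b phi) by lra. field. lra. }
  assert (Hsupp' : forall x, b' x <> 0 -> In x s).
  { intros x Hx. unfold b' in Hx. destruct (fdec x phi); [lra|]. apply Hs'; auto. intros E; apply Hx; rewrite E; unfold Rdiv; ring. }
  assert (Hbnd' : forall x, 0 <= b' x <= 1).
  { intros x. unfold b'. destruct (fdec x phi); [lra|].
    destruct (Req_dec_T (b x) 0) as [E|E]. rewrite E; unfold Rdiv; split; [lra|]; rewrite Rmult_0_l; lra.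
    assert (In x s) by (apply Hs'; auto).
    assert (b x <= sumf s b) by (apply sumf_ge_elem; auto). pose proof (Hb x).
    split. unfold Rdiv; apply Rmult_le_pos; [lra|]; apply Rlt_le, Rinv_0_lt_compat; lra. apply (Rmult_le_reg_r (1 - b phi)); [lra|].
    unfold Rdiv. rewrite Rmult_assoc, Rinv_l by lra. lra. }
  assert (Hbet' : is_bet b').
  { split; auto. exists s. split; [split; auto|]. apply Hsum'. }
  replace b with (mix (b phi) (pm phi) b').
  - apply Hmix; auto. apply pm_bet.
  - apply functional_extensionality; intros x. unfold mix, b'.
    destruct (fdec x phi) as [->|Hx]. rewrite pm_eq; ring. rewrite pm_neq; auto. field. lra.
Qed.

End Infra.

Section Wb.
Context {P : Type}.
Notation fm := (form P).
Implicit Types (b : fm -> R) (phi psi : fm) (U : fm -> R).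

Lemma wbet_cons (p : R * fm) l x : wbet (p :: l) x = fst p * pm (snd p) x + wbet l x.
Proof. reflexivity. Qed.

Lemma wbet_supp (l : list (R * fm)) x : wbet l x <> 0 -> In x (map snd l).
Proof.
  induction l as [|p l IH]; intros H. unfold wbet in H; simpl in H; lra.
  rewrite wbet_cons in H. simpl. destruct (fdec x (snd p)) as [->|Hx]; [left; auto|right].
  apply IH. rewrite pm_neq in H; auto. lra.
Qed.

Lemma Vs_wbet U (l : list (R * fm)) s : NoDup s -> (forall x, In x (map snd l) -> In x s) ->
  Vs U (wbet l) s = sumf l (fun p => fst p * U (snd p)).
Proof.
  induction l as [|p l IH]; intros N S.
  - unfold Vs, wbet. simpl. rewrite (sumf_ext _ _ (fun _ => 0)), sumf_const by (intros; lra). rewrite sumf_nil. lra.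
  - unfold Vs in *. rewrite (sumf_ext _ _ (fun x => fst p * (pm (snd p) x * U x) + wbet l x * U x))
      by (intros; rewrite wbet_cons; ring).
    rewrite sumf_plus, sumf_scal, sumf_pm, IH, sumf_cons; auto.
    intros; apply S; right; auto. apply S; left; auto.
Qed.

Lemma Val_wbet U (l : list (R * fm)) : Val U (wbet l) = sumf l (fun p => fst p * U (snd p)).
Proof.
  rewrite (Val_spec _ _ (nodup fdec (map snd l))). apply Vs_wbet. apply NoDup_nodup.
  intros; apply nodup_In; auto.
  split. apply NoDup_nodup. intros x Hx; apply nodup_In, wbet_supp; auto.
Qed.

Lemma wbet_bet (l : list (R * fm)) : (forall p, In p l -> 0 <= fst p) -> sumf l fst = 1 -> is_bet (wbet l).
Proof.
  intros Hp Hs. split.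
  - intros x. assert (0 <= wbet l x <= sumf l fst); [|lra]. clear Hs. induction l as [|p l IH].
    + unfold wbet; simpl. rewrite sumf_nil; lra.
    + rewrite wbet_cons, sumf_cons. assert (0 <= fst p) by (apply Hp; left; auto).
      assert (0 <= pm (snd p) x <= 1) by (unfold pm; destruct (excluded_middle_informative _); lra).
      assert (0 <= wbet l x <= sumf l fst) by (apply IH; intros; apply Hp; right; auto). nra.
  - exists (nodup fdec (map snd l)). split. split. apply NoDup_nodup. intros x Hx; apply nodup_In, wbet_supp; auto.
    pose proof (Vs_wbet (fun _ => 1) l (nodup fdec (map snd l)) (NoDup_nodup _ _)) as H.
    specialize (H (fun x Hx => proj2 (nodup_In _ _ _) Hx)).
    unfold Vs in H. 
    assert (E1 : sumf (nodup fdec (map snd l)) (fun phi => wbet l phi * 1) = sumf (nodup fdec (map snd l)) (wbet l)).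
    { apply sumf_ext. intros; ring. }
    rewrite E1 in H. unfold sumf in H. rewrite H. transitivity (sumf l fst); [apply sumf_ext; intros; ring | exact Hs].
Qed.

Definition rep (pref : (fm -> R) -> (fm -> R) -> Prop) U :=
  forall b b', is_bet b -> is_bet b' -> (pref b b' <-> Val U b >= Val U b').

Lemma bet_value_iff b U v : is_bet b -> (bet_value b U v <-> v = Val U b).
Proof.
  intros Hb. split.
  - intros [s [Hs ->]]. rewrite (Val_spec _ _ s); auto.
  - intros ->. destruct (bet_fsupp b Hb) as [s Hs]. exists s. split; auto. apply Val_spec; auto.
Qed.

Lemma represents_rep {Omega : Type} pref (t : fm -> Omega -> Prop) lam :
  represents pref t lam <-> rep pref (fun phi => lam (t phi)).
Proof.
  split; intros H b b' Hb Hb'; specialize (H b b' Hb Hb').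
  - rewrite H. split.
    + intros Hv. apply Hv; apply bet_value_iff; auto.
    + intros Hv v v' H1 H2. apply bet_value_iff in H1; auto. apply bet_value_iff in H2; auto. subst; auto.
  - rewrite H. split.
    + intros Hv v v' H1 H2. apply bet_value_iff in H1; auto. apply bet_value_iff in H2; auto. subst; auto.
    + intros Hv. apply Hv; apply bet_value_iff; auto.
Qed.

End Wb.

Lemma arch_hi x y z : x > y -> y > z -> exists a, 0 < a < 1 /\ a * x + (1 - a) * z > y.
Proof.
  intros H1 H2. set (d := x - z). assert (Hd : d > 0) by (unfold d; lra).
  exists ((d + (y - z)) / (2 * d)).
  assert (E : (d + (y - z)) / (2 * d) * d = (d + (y - z)) / 2) by (field; lra).
  assert (0 < (d + (y - z)) / (2 * d)).
  { unfold Rdiv. apply Rmult_lt_0_compat; [lra|]. apply Rinv_0_lt_compat; lra. }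
  split; [split; auto|].
  - apply (Rmult_lt_reg_r d); auto. rewrite E. unfold d; lra.
  - replace ((d + (y - z)) / (2 * d) * x + (1 - (d + (y - z)) / (2 * d)) * z) with
      (z + (d + (y - z)) / (2 * d) * d) by (unfold d; ring). rewrite E. unfold d; lra.
Qed.

Lemma arch_lo x y z : x > y -> y > z -> exists c, 0 < c < 1 /\ y > c * x + (1 - c) * z.
Proof.
  intros H1 H2. set (d := x - z). assert (Hd : d > 0) by (unfold d; lra).
  exists ((y - z) / (2 * d)).
  assert (E : (y - z) / (2 * d) * d = (y - z) / 2) by (field; lra).
  assert (0 < (y - z) / (2 * d)).
  { unfold Rdiv. apply Rmult_lt_0_compat; [lra|]. apply Rinv_0_lt_compat; lra. }
  split; [split; auto|].
  - apply (Rmult_lt_reg_r d); auto. rewrite E. unfold d; lra.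
  - replace ((y - z) / (2 * d) * x + (1 - (y - z) / (2 * d)) * z) with
      (z + (y - z) / (2 * d) * d) by (unfold d; ring). rewrite E. unfold d; lra.
Qed.

Section C1.
Context {P : Type} (PT PF : P).
Notation fm := (form P).
Implicit Types (b : fm -> R) (phi psi : fm) (U : fm -> R).

Definition IEu (u : fm -> R) : Prop :=
  forall (n : nat) (phi : nat -> fm) (psi : fm),
    (forall i, (i < n)%nat -> deduces PT PF (phi i) psi) ->
    u psi + sumf (even_subsets n) (fun I => u (bigand PT phi I)) >=
    sumf (odd_subsets n) (fun I => u (bigand PT phi I)).

Lemma IE_iff pref u : rep pref u -> u (Var PF) = 0 ->
  (InclusionExclusion PT PF pref <-> IEu u).
Proof.
  intros Hr HF. unfold rep in Hr.
  assert (key : forall n (phi : nat -> fm) psi,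
    let Ev := even_subsets n in let Od := odd_subsets n in
    let m := INR (Nat.max (length Ev + 1) (length Od)) in
    (pref (wbet ((1 / m, psi) :: map (fun I => (1 / m, bigand PT phi I)) Ev ++ [(1 - INR (length Ev + 1) / m, Var PF)]))
          (wbet (map (fun I => (1 / m, bigand PT phi I)) Od ++ [(1 - INR (length Od) / m, Var PF)]))
     <-> u psi + sumf Ev (fun I => u (bigand PT phi I)) >= sumf Od (fun I => u (bigand PT phi I)))).
  { intros n phi psi Ev Od m.
    assert (HE : (length Ev + 1 <= Nat.max (length Ev + 1) (length Od))%nat) by apply Nat.le_max_l.
    assert (HO : (length Od <= Nat.max (length Ev + 1) (length Od))%nat) by apply Nat.le_max_r.
    apply le_INR in HE. apply le_INR in HO. fold m in HE, HO.
    rewrite plus_INR in HE |- *. simpl INR in HE |- *.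
    pose proof (pos_INR (length Ev)). pose proof (pos_INR (length Od)).
    assert (Hm : m > 0) by lra.
    assert (E1 : INR (length Ev) / m + 1 / m = (INR (length Ev) + 1) / m) by (field; lra).
    assert (E2 : (INR (length Ev) + 1) / m <= 1) by (apply (Rmult_le_reg_r m); auto; unfold Rdiv; rewrite Rmult_assoc, Rinv_l; lra).
    assert (E3 : INR (length Od) / m <= 1) by (apply (Rmult_le_reg_r m); auto; unfold Rdiv; rewrite Rmult_assoc, Rinv_l; lra).
    assert (Hm1 : 0 < 1 / m) by (unfold Rdiv; rewrite Rmult_1_l; apply Rinv_0_lt_compat; auto).
    rewrite Hr.
    2:{ apply wbet_bet.
        - intros p Hp. simpl in Hp. destruct Hp as [<-|Hp]; [simpl; lra|]. apply in_app_or in Hp.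
          destruct Hp as [Hp|[<-|[]]]; [|simpl; lra]. apply in_map_iff in Hp as [I [<- _]]. simpl; lra.
        - rewrite sumf_cons, sumf_app, sumf_map, sumf_cons, sumf_nil. simpl fst. rewrite sumf_const. field. lra. }
    2:{ apply wbet_bet.
        - intros p Hp. apply in_app_or in Hp.
          destruct Hp as [Hp|[<-|[]]]; [|simpl; lra]. apply in_map_iff in Hp as [I [<- _]]. simpl; lra.
        - rewrite sumf_app, sumf_map, sumf_cons, sumf_nil. simpl fst. rewrite sumf_const. field. lra. }

    rewrite !Val_wbet. rewrite sumf_cons, !sumf_app, !sumf_map, !sumf_cons, !sumf_nil. simpl fst; simpl snd.
    rewrite HF, !sumf_scal.
    split; intros HH.
    - apply Rle_ge. apply (Rmult_le_reg_l (1 / m)); auto. rewrite Rmult_plus_distr_l; lra.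
    - apply Rmult_ge_compat_l with (r := 1/m) in HH; lra. }
  split.
  - intros H n phi psi Hd. apply key. apply H. auto.
  - intros H n phi psi Hd. apply key. apply H. auto.
Qed.

Lemma rep_props pref u : rep pref u -> u (Var PT) = 1 -> u (Var PF) = 0 -> (forall phi, 0 <= u phi <= 1) ->
  NonTriviality PT PF pref /\ ObjectiveEU pref.
Proof.
  intros Hr HT HF Hu. unfold rep in Hr.
  assert (Hpm : forall phi psi, pref (pm phi) (pm psi) <-> u phi >= u psi).
  { intros. rewrite Hr by apply pm_bet. rewrite !Val_pm. tauto. }
  split; [split|].
  - intros phi. rewrite !Hpm. specialize (Hu phi). lra.
  - split; rewrite Hpm; lra.
  - split; [|split; [|split]].
    + intros b b' Hb Hb'. rewrite !Hr by auto. lra.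
    + intros b b' b'' Hb Hb' Hb''. rewrite !Hr by auto. lra.
    + intros b b' b'' Hb Hb' Hb'' [H1 H2] [H3 H4]. rewrite Hr in H1, H2, H3, H4 by auto.
      assert (G1 : Val u b > Val u b') by lra. assert (G2 : Val u b' > Val u b'') by lra.
      destruct (arch_hi _ _ _ G1 G2) as [a [Ha Ha']]. destruct (arch_lo _ _ _ G1 G2) as [c [Hc Hc']].
      exists a, c. split; auto. split; auto.
      assert (Ba : is_bet (mix a b b'')) by (apply mix_bet; auto; lra).
      assert (Bc : is_bet (mix c b b'')) by (apply mix_bet; auto; lra).
      unfold spref. rewrite !Hr by auto. rewrite !Val_mix by auto. lra.
    + intros b b' b'' a Hb Hb' Hb'' Ha. 
      rewrite !Hr by (auto; apply mix_bet; auto; lra). rewrite !Val_mix by auto.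
      split; intros H. nra. apply Rle_ge. apply (Rmult_le_reg_l a); [lra|]. lra.
Qed.

End C1.

Section VNM.
Context {P : Type} (PT PF : P) (pref : (form P -> R) -> (form P -> R) -> Prop).
Notation fm := (form P).
Implicit Types (b : fm -> R) (phi psi : fm) (U : fm -> R).
Context (HNT : NonTriviality PT PF pref) (HEU : ObjectiveEU pref).

Let T := pm (Var PT) : fm -> R.
Let F := pm (Var PF) : fm -> R.
Let M (a : R) := mix a T F.

Let Hc : Complete pref := proj1 HEU.
Let Ht : Transitive pref := proj1 (proj2 HEU).
Let Ha : Archimedean pref := proj1 (proj2 (proj2 HEU)).
Let Hi : Independence pref := proj2 (proj2 (proj2 HEU)).

Lemma T_bet : is_bet T. Proof. apply pm_bet. Qed.
Lemma F_bet : is_bet F. Proof. apply pm_bet. Qed.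
Lemma M_bet a : 0 <= a <= 1 -> is_bet (M a).
Proof. intros; apply mix_bet; auto using T_bet, F_bet. Qed.

Lemma refl b : is_bet b -> pref b b.
Proof. intros Hb. destruct (Hc b b Hb Hb); auto. Qed.

Lemma mix_same a b : mix a b b = b.
Proof. apply functional_extensionality; intros; unfold mix; ring. Qed.
Lemma mix_swap a b c : mix a b c = mix (1 - a) c b.
Proof. apply functional_extensionality; intros; unfold mix; ring. Qed.
Lemma mix_1 b c : mix 1 b c = b.
Proof. apply functional_extensionality; intros; unfold mix; ring. Qed.
Lemma mix_0 b c : mix 0 b c = c.
Proof. apply functional_extensionality; intros; unfold mix; ring. Qed.
Lemma M_mixF a s : mix a (M s) F = M (a * s).
Proof. apply functional_extensionality; intros; unfold M, mix; ring. Qed.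
Lemma M_mixT c s : mix c T (M s) = M (c + (1 - c) * s).
Proof. apply functional_extensionality; intros; unfold M, mix; ring. Qed.
Lemma M_mixM a x y : mix a (M x) (M y) = M (a * x + (1 - a) * y).
Proof. apply functional_extensionality; intros; unfold M, mix; ring. Qed.

Lemma TF : spref pref T F.
Proof. exact (proj2 HNT). Qed.

Lemma indep2 a b b' c : is_bet b -> is_bet b' -> is_bet c -> 0 < a < 1 ->
  (pref b b' <-> pref (mix a c b) (mix a c b')).
Proof.
  intros. rewrite (mix_swap a c b), (mix_swap a c b'). apply Hi; auto. lra.
Qed.

Lemma strict1 be : 0 <= be < 1 -> spref pref T (M be).
Proof.
  intros Hb. destruct (Req_dec_T be 0) as [->|Hne].
  { unfold M. rewrite mix_0. apply TF. }
  pose proof TF as [H1 H2].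
  assert (E : M be = mix (1 - be) F T) by (unfold M; rewrite mix_swap; f_equal; ring).
  assert (Hbe : 0 < 1 - be < 1) by lra.
  pose proof (Hi T F T (1 - be) T_bet F_bet T_bet Hbe) as HH. rewrite mix_same, <- E in HH.
  pose proof (Hi F T T (1 - be) F_bet T_bet T_bet Hbe) as HH2. rewrite mix_same, <- E in HH2.
  split. apply HH, H1. intros H. apply H2, HH2, H.
Qed.

Lemma strict al be : 0 <= be -> be < al -> al <= 1 -> spref pref (M al) (M be).
Proof.
  intros H1 H2 H3. destruct (Req_dec_T al 1) as [->|Hne].
  { unfold M at 1. rewrite mix_1. apply strict1; lra. }
  assert (Hg : 0 <= be / al < 1).
  { split. unfold Rdiv; apply Rmult_le_pos; [lra|apply Rlt_le, Rinv_0_lt_compat; lra].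
    apply (Rmult_lt_reg_r al); [lra|]. unfold Rdiv; rewrite Rmult_assoc, Rinv_l; lra. }
  pose proof (strict1 _ Hg) as [S1 S2].
  assert (E : M be = mix al (M (be / al)) F) by (rewrite M_mixF; f_equal; field; lra).
  assert (Bg : is_bet (M (be / al))) by (apply M_bet; lra).
  assert (Hal : 0 < al < 1) by lra.
  pose proof (Hi T (M (be / al)) F al T_bet Bg F_bet Hal) as HH. rewrite <- E in HH. fold (M al) in HH.
  pose proof (Hi (M (be / al)) T F al Bg T_bet F_bet Hal) as HH2. rewrite <- E in HH2. fold (M al) in HH2.
  split. apply HH, S1. intros H. apply S2, HH2, H.
Qed.

Lemma M_le al be : 0 <= be <= al -> al <= 1 -> pref (M al) (M be).
Proof.
  intros H1 H2. destruct (Req_dec_T al be) as [->|Hne]. apply refl, M_bet; lra.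
  apply strict; lra.
Qed.

Lemma bounds b : is_bet b -> pref T b /\ pref b F.
Proof.
  revert b. apply (bet_ind (fun b => pref T b /\ pref b F)).
  - intros phi. exact (proj1 HNT phi).
  - intros a b c Hav Hb Hc' [Tb bF] [Tc cF].
    assert (Bm : is_bet (mix a b c)) by (apply mix_bet; auto; lra).
    assert (B1 : is_bet (mix a T c)) by (apply mix_bet; auto using T_bet; lra).
    assert (B2 : is_bet (mix a F c)) by (apply mix_bet; auto using F_bet; lra).
    split.
    + assert (X1 : pref T (mix a T c)).
      { pose proof (indep2 a T c T T_bet Hc' T_bet Hav) as HH. rewrite mix_same in HH. apply HH, Tc. }
      assert (X2 : pref (mix a T c) (mix a b c)) by (apply Hi; auto using T_bet).
      exact (Ht _ _ _ T_bet B1 Bm X1 X2).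
    + assert (X1 : pref (mix a F c) F).
      { pose proof (indep2 a c F F Hc' F_bet F_bet Hav) as HH. rewrite mix_same in HH. apply HH, cF. }
      assert (X2 : pref (mix a b c) (mix a F c)) by (apply Hi; auto using F_bet).
      exact (Ht _ _ _ Bm B2 F_bet X2 X1).
Qed.

Definition indiff b c := pref b c /\ pref c b.

Lemma exists_M b : is_bet b -> exists al, 0 <= al <= 1 /\ indiff b (M al).
Proof.
  intros Hb. destruct (bounds b Hb) as [Tb bF].
  destruct (classic (pref F b)) as [Fb|nFb].
  { exists 0. split; [lra|]. unfold M; rewrite mix_0. split; auto. }
  destruct (classic (pref b T)) as [bT|nbT].
  { exists 1. split; [lra|]. unfold M; rewrite mix_1. split; auto. }
  set (S := fun al => 0 <= al <= 1 /\ pref b (M al)).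
  assert (Sb : bound S) by (exists 1; intros x [Hx _]; lra).
  assert (S0 : S 0) by (split; [lra|]; unfold M; rewrite mix_0; auto).
  destruct (completeness S Sb (ex_intro _ 0 S0)) as [s [Hub Hlub]].
  assert (s0 : 0 <= s) by (apply Hub; auto).
  assert (s1 : s <= 1) by (apply Hlub; intros x [Hx _]; lra).
  assert (Bs : is_bet (M s)) by (apply M_bet; lra).
  exists s. split; [lra|].
  assert (P1 : pref b (M s)).
  { destruct (classic (pref b (M s))) as [H|H]; auto. exfalso.
    assert (H' : pref (M s) b) by (destruct (Hc b (M s)); auto; contradiction).
    assert (sp : 0 < s).
    { destruct (Req_dec_T s 0) as [E|E]; [|lra]. exfalso. apply H. rewrite E. unfold M; rewrite mix_0; auto. }
    destruct (Ha (M s) b F Bs Hb F_bet) as [a [c [Ha1 [Hc1 [Hx _]]]]]; [split; auto|split; auto|].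
    rewrite M_mixF in Hx.
    assert (Hnb : ~ is_upper_bound S (a * s)).
    { intros Hu. specialize (Hlub _ Hu). nra. }
    apply Hnb. intros x [Hx1 Hx2]. destruct (Rle_dec x (a * s)) as [|Hlt]; auto. exfalso.
    destruct Hx as [_ Hx]. apply Hx.
    assert (Bx : is_bet (M x)) by (apply M_bet; lra).
    assert (Bas : is_bet (M (a * s))) by (apply M_bet; nra).
    assert (X : pref (M x) (M (a * s))) by (apply M_le; nra).
    exact (Ht _ _ _ Hb Bx Bas Hx2 X). }
  split; auto.
  destruct (classic (pref (M s) b)) as [H|H]; auto. exfalso.
  assert (s1' : s < 1).
  { destruct (Req_dec_T s 1) as [E|E]; [|lra]. exfalso. apply H. rewrite E. unfold M; rewrite mix_1; auto. }
  destruct (Ha T b (M s) T_bet Hb Bs) as [a [c [Ha1 [Hc1 [_ Hx]]]]]; [split; auto|split; auto|].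
  rewrite M_mixT in Hx.
  assert (S (c + (1 - c) * s)) by (split; [nra|]; apply Hx).
  specialize (Hub _ H0). nra.
Qed.

Definition Ufun b : R :=
  match excluded_middle_informative (exists al, 0 <= al <= 1 /\ indiff b (M al)) with
  | left h => proj1_sig (constructive_indefinite_description _ h)
  | right _ => 0 end.

Lemma Ufun_spec b : is_bet b -> 0 <= Ufun b <= 1 /\ indiff b (M (Ufun b)).
Proof.
  intros Hb. unfold Ufun. destruct (excluded_middle_informative _) as [h|h].
  - destruct (constructive_indefinite_description _ h) as [x Hx]. simpl. auto.
  - exfalso. apply h, exists_M; auto.
Qed.

Lemma M_uniq b x y : is_bet b -> 0 <= x <= 1 -> 0 <= y <= 1 -> indiff b (M x) -> indiff b (M y) -> x = y.
Proof.
  intros Hb Hx Hy [H1 H2] [H3 H4].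
  destruct (Rtotal_order x y) as [Hl|[He|Hl]]; auto; exfalso.
  - destruct (strict y x) as [_ S]; try lra. apply S. apply Ht with b; auto; apply M_bet; lra.
  - destruct (strict x y) as [_ S]; try lra. apply S. apply Ht with b; auto; apply M_bet; lra.
Qed.

Lemma Ufun_rep b b' : is_bet b -> is_bet b' -> (pref b b' <-> Ufun b >= Ufun b').
Proof.
  intros Hb Hb'. destruct (Ufun_spec b Hb) as [U1 [I1 I2]]. destruct (Ufun_spec b' Hb') as [U2 [I3 I4]].
  assert (B1 : is_bet (M (Ufun b))) by (apply M_bet; lra).
  assert (B2 : is_bet (M (Ufun b'))) by (apply M_bet; lra).
  split.
  - intros H. destruct (Rge_dec (Ufun b) (Ufun b')) as [|Hl]; auto. exfalso.
    destruct (strict (Ufun b') (Ufun b)) as [_ S]; try lra. apply S.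
    apply Ht with b; auto. apply Ht with b'; auto.
  - intros H. apply Ht with (M (Ufun b)); auto. apply Ht with (M (Ufun b')); auto.
    apply M_le; lra.
Qed.

Lemma indiff_trans b c d : is_bet b -> is_bet c -> is_bet d -> indiff b c -> indiff c d -> indiff b d.
Proof. intros ? ? ? [] []; split; eapply Ht; eauto. Qed.

Lemma Ufun_mix a b c : 0 < a < 1 -> is_bet b -> is_bet c -> Ufun (mix a b c) = a * Ufun b + (1 - a) * Ufun c.
Proof.
  intros Hav Hb Hc'. destruct (Ufun_spec b Hb) as [U1 [I1 I2]]. destruct (Ufun_spec c Hc') as [U2 [I3 I4]].
  assert (B1 : is_bet (M (Ufun b))) by (apply M_bet; lra).
  assert (B2 : is_bet (M (Ufun c))) by (apply M_bet; lra).
  assert (Bm : is_bet (mix a b c)) by (apply mix_bet; auto; lra).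
  assert (Bm1 : is_bet (mix a (M (Ufun b)) c)) by (apply mix_bet; auto; lra).
  assert (Bm2 : is_bet (mix a (M (Ufun b)) (M (Ufun c)))) by (apply mix_bet; auto; lra).
  destruct (Ufun_spec _ Bm) as [U3 I5].
  apply (M_uniq (mix a b c)); auto. nra.
  rewrite <- M_mixM.
  apply indiff_trans with (mix a (M (Ufun b)) c); auto.
  - split; apply Hi; auto.
  - split; apply indep2; auto.
Qed.

Theorem vNM : exists u : fm -> R, rep pref u /\ u (Var PT) = 1 /\ u (Var PF) = 0 /\ (forall phi, 0 <= u phi <= 1).
Proof.
  exists (fun phi => Ufun (pm phi)).
  assert (HV : forall b, is_bet b -> Ufun b = Val (fun phi => Ufun (pm phi)) b).
  { apply bet_ind.
    - intros phi. rewrite Val_pm. auto.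
    - intros a b c Hav Hb Hc' E1 E2. rewrite Ufun_mix, Val_mix, E1, E2; auto. }
  split; [|split; [|split]].
  - intros b b' Hb Hb'. rewrite <- !HV by auto. apply Ufun_rep; auto.
  - destruct (Ufun_spec T T_bet) as [U1 I1]. symmetry. apply (M_uniq T); [apply T_bet | lra | exact U1 | | exact I1].
    unfold M. rewrite mix_1. split; apply refl, T_bet.
  - destruct (Ufun_spec F F_bet) as [U1 I1]. symmetry. apply (M_uniq F); [apply F_bet | lra | exact U1 | | exact I1].
    unfold M. rewrite mix_0. split; apply refl, F_bet.
  - intros phi. apply Ufun_spec, pm_bet.
Qed.

End VNM.

Lemma pow_m1 n : (-1) ^ n = if Nat.even n then 1 else -1.
Proof.
  induction n; [simpl; auto|]. change ((-1)^(S n)) with (-1 * (-1)^n).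
  rewrite IHn, Nat.even_succ. unfold Nat.odd. destruct (Nat.even n); simpl; ring.
Qed.

Lemma sign_split (L : list (list nat)) (g : list nat -> R) :
  sumf L (fun I => (-1) ^ (length I) * g I) =
  sumf (filter (fun I => Nat.eqb (length I) 0) L) g +
  sumf (filter (fun I => andb (Nat.ltb 0 (length I)) (Nat.even (length I))) L) g -
  sumf (filter (fun I => Nat.odd (length I)) L) g.
Proof.
  induction L as [|I L IH]; [unfold sumf; simpl; ring|].
  simpl filter. rewrite sumf_cons, IH, pow_m1.
  destruct (length I) as [|k] eqn:El.
  - simpl. rewrite sumf_cons. ring.
  - unfold Nat.odd. cbn [Nat.eqb Nat.ltb Nat.leb andb]. destruct (Nat.even (S k)); cbn [negb]; rewrite ?sumf_cons; ring.
Qed.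

Lemma filter_len0_map (x : nat) (L : list (list nat)) :
  filter (fun I => Nat.eqb (length I) 0) (map (cons x) L) = [].
Proof. induction L; simpl; auto. Qed.

Lemma filter_len0_subsets l : filter (fun I => Nat.eqb (length I) 0) (subsets l) = [[]].
Proof.
  induction l; simpl; auto. rewrite filter_app, IHl, filter_len0_map. auto.
Qed.

Lemma subsets_in l I : In I (subsets l) -> forall i, In i I -> In i l.
Proof.
  revert I; induction l as [|x l IH]; simpl; intros I H i Hi.
  - destruct H as [<-|[]]; destruct Hi.
  - apply in_app_or in H. destruct H as [H|H]. right; eapply IH; eauto.
    apply in_map_iff in H as [J [<- HJ]]. destruct Hi as [->|Hi]; [left; auto|right; eapply IH; eauto].
Qed.

Lemma even_in n I : In I (even_subsets n) -> In I (subsets (seq 0 n)) /\ (0 < length I)%nat.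
Proof.
  unfold even_subsets. rewrite filter_In. intros [H1 H2]. apply andb_true_iff in H2 as [H2 _].
  split; auto. apply Nat.ltb_lt; auto.
Qed.

Lemma odd_in n I : In I (odd_subsets n) -> In I (subsets (seq 0 n)) /\ (0 < length I)%nat.
Proof.
  unfold odd_subsets. rewrite filter_In. intros [H1 H2]. split; auto.
  destruct I; simpl in *; [discriminate|lia].
Qed.

Lemma map_nth_seq {A} (E : list A) d : map (fun i => nth i E d) (seq 0 (length E)) = E.
Proof.
  induction E as [|a E IH]; simpl; auto. f_equal. rewrite <- seq_shift, map_map. simpl. auto.
Qed.

Section Beta.
Context {P : Type} (PT PF : P).
Notation fm := (form P).

Definition valid (v : P -> bool) := v PT = true /\ v PF = false.

Lemma equiv_of_eval (x y : fm) : (forall v, v PT = true -> v PF = false -> feval v x = feval v y) -> equiv PT PF x y.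
Proof. intros H; split; intros v H1 H2 H3; rewrite <- H3; [symmetry|]; auto. Qed.

Definition uexact (u : fm -> R) := forall x y, equiv PT PF x y -> u x = u y.

Definition cj (x : fm) (e : nat -> fm) (I : list nat) : fm := fold_left (fun acc i => And acc (e i)) I x.

Lemma feval_cj v x e I : feval v (cj x e I) = feval v x && forallb (fun i => feval v (e i)) I.
Proof.
  revert x; induction I as [|i I IH]; intros x; simpl.
  - rewrite andb_true_r; auto.
  - unfold cj in *. simpl. rewrite IH. simpl. rewrite andb_assoc. auto.
Qed.

Lemma feval_bigand v (phi : nat -> fm) I : v PT = true -> feval v (bigand PT phi I) = forallb (fun i => feval v (phi i)) I.
Proof.
  intros HT. induction I as [|i I IH]; simpl; auto.
  destruct I as [|j I']; simpl. rewrite andb_true_r; auto. simpl in IH. rewrite IH. auto.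
Qed.

Lemma forallb_andb_l (b : bool) (f : nat -> bool) I : I <> [] -> forallb (fun i => b && f i) I = b && forallb f I.
Proof.
  induction I as [|i I IH]; intros H; [contradiction|]. simpl. destruct I as [|j I'].
  - simpl. rewrite !andb_true_r. auto.
  - rewrite IH by discriminate. destruct b; simpl; auto.
Qed.

Context (u : fm -> R).
Context (Hex : uexact u).

Fixpoint beta (x : fm) (E : list fm) : R :=
  match E with
  | [] => u x
  | y :: E' => beta x E' - beta (And x y) E'
  end.

Lemma beta_equiv E : forall x x', equiv PT PF x x' -> beta x E = beta x' E.
Proof.
  induction E as [|y E IH]; intros x x' H; simpl; auto.
  rewrite (IH x x' H). rewrite (IH (And x y) (And x' y)); auto.
  destruct H as [H1 H2]. split; intros v h1 h2 h3; simpl in *; apply andb_true_iff in h3 as [h3 h4];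
  apply andb_true_iff; auto.
Qed.

Lemma beta_subsets (e : nat -> fm) l : forall x,
  beta x (map e l) = sumf (subsets l) (fun I => (-1) ^ (length I) * u (cj x e I)).
Proof.
  induction l as [|i l IH]; intros x; simpl.
  - unfold sumf; simpl. ring.
  - rewrite sumf_app, sumf_map, !IH. simpl length.
    rewrite (sumf_ext _ (fun I => (-1) ^ S (length I) * u (cj x e (i :: I))) (fun I => -1 * ((-1) ^ (length I) * u (cj (And x (e i)) e I)))).
    rewrite sumf_scal. ring. intros I _. simpl. unfold cj. simpl. ring.
Qed.

Lemma beta_expand (e : nat -> fm) n x :
  beta x (map e (seq 0 n)) = u x + sumf (even_subsets n) (fun I => u (cj x e I)) - sumf (odd_subsets n) (fun I => u (cj x e I)).
Proof.
  rewrite beta_subsets, sign_split, filter_len0_subsets. unfold even_subsets, odd_subsets.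
  rewrite sumf_cons, sumf_nil. simpl. ring.
Qed.

Lemma IEu_of_beta : (forall x E, beta x E >= 0) -> IEu PT PF u.
Proof.
  intros Hb n phi psi Hd. pose proof (Hb psi (map phi (seq 0 n))) as H. rewrite beta_expand in H.
  assert (Hc : forall I, In I (subsets (seq 0 n)) -> (0 < length I)%nat -> u (cj psi phi I) = u (bigand PT phi I)).
  { intros I HI HL. apply Hex, equiv_of_eval. intros v h1 h2. rewrite feval_cj, feval_bigand by auto.
    destruct (forallb (fun i => feval v (phi i)) I) eqn:Ef; [|apply andb_false_r].
    rewrite andb_true_r. destruct I as [|i I]; [simpl in HL; lia|].
    simpl in Ef. apply andb_true_iff in Ef as [Ef _]. apply (Hd i); auto.
    apply in_seq with (start := 0%nat). eapply subsets_in; eauto. left; auto. }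
  rewrite (sumf_ext (even_subsets n) _ (fun I => u (bigand PT phi I))) in H by (intros I HI; apply even_in in HI as [? ?]; auto).
  rewrite (sumf_ext (odd_subsets n) _ (fun I => u (bigand PT phi I))) in H by (intros I HI; apply odd_in in HI as [? ?]; auto).
  lra.
Qed.

Lemma beta_of_IEu : IEu PT PF u -> forall x E, beta x E >= 0.
Proof.
  intros HI x E. set (e := fun i => nth i E (Var PT)).
  rewrite <- (map_nth_seq E (Var PT)). fold e. rewrite beta_expand.
  pose proof (HI (length E) (fun i => And x (e i)) x) as H.
  assert (Hd : forall i, (i < length E)%nat -> deduces PT PF (And x (e i)) x).
  { intros i _ v h1 h2 h3. simpl in h3. apply andb_true_iff in h3; tauto. }
  specialize (H Hd).
  assert (Hc : forall I, (0 < length I)%nat -> u (cj x e I) = u (bigand PT (fun i => And x (e i)) I)).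
  { intros I HL. apply Hex, equiv_of_eval. intros v h1 h2. rewrite feval_cj, feval_bigand by auto.
    simpl. rewrite forallb_andb_l; auto. destruct I; simpl in HL; [lia|discriminate]. }
  rewrite (sumf_ext (even_subsets _) _ (fun I => u (bigand PT (fun i => And x (e i)) I))) by (intros I HH; apply even_in in HH as [? ?]; auto).
  rewrite (sumf_ext (odd_subsets _) _ (fun I => u (bigand PT (fun i => And x (e i)) I))) by (intros I HH; apply odd_in in HH as [? ?]; auto).
  lra.
Qed.

Definition sat (x : fm) := exists v, v PT = true /\ v PF = false /\ feval v x = true.

Lemma beta_unsat (HF : u (Var PF) = 0) E : forall x, ~ sat x -> beta x E = 0.
Proof.
  induction E as [|y E IH]; intros x Hx; simpl.
  - rewrite <- HF. apply Hex. split; intros v h1 h2 h3.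
    + exfalso; apply Hx; exists v; auto.
    + simpl in h3; congruence.
  - rewrite !IH; [ring| |auto]. intros [v [h1 [h2 h3]]]. apply Hx. exists v. simpl in h3.
    apply andb_true_iff in h3. split; [|split]; tauto.
Qed.

Lemma beta_ded E : forall x y, In y E -> deduces PT PF x y -> beta x E = 0.
Proof.
  induction E as [|y' E IH]; intros x y Hy Hd; [destruct Hy|]. simpl.
  destruct Hy as [->|Hy].
  - rewrite (beta_equiv E x (And x y)); [ring|]. split; intros v h1 h2 h3; simpl in *.
    rewrite h3, (Hd v); auto. apply andb_true_iff in h3; tauto.
  - rewrite (IH x y Hy Hd), (IH (And x y') y Hy); [ring|].
    intros v h1 h2 h3. simpl in h3. apply andb_true_iff in h3 as [h3 _]. auto.
Qed.

End Beta.

Lemma sumf_flat_map {A B} (l : list A) (f : A -> list B) g : sumf (flat_map f l) g = sumf l (fun p => sumf (f p) g).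
Proof. induction l; simpl; auto. rewrite sumf_app, sumf_cons, IHl. auto. Qed.

Lemma sumf_mul {A B} (l : list A) (l' : list B) f g : sumf l f * sumf l' g = sumf l (fun p => sumf l' (fun q => f p * g q)).
Proof.
  induction l as [|a l IH]; [unfold sumf; simpl; ring|]. rewrite !sumf_cons, <- IH, sumf_scal. ring.
Qed.

Section Model2.
Context {P : Type} (PT PF : P).
Notation fm := (form P).
Context (u : fm -> R) (Hex : uexact PT PF u) (HT : u (Var PT) = 1) (HF : u (Var PF) = 0)
        (Hb : forall x E, beta u x E >= 0).

Definition ind (w phi : fm) : R := if excluded_middle_informative (deduces PT PF w phi) then 1 else 0.

Definition evr (r : R * list (R * fm)) (w : fm) : R := fst r + sumf (snd r) (fun p => fst p * ind w (snd p)).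
Definition valr (r : R * list (R * fm)) : R := fst r + sumf (snd r) (fun p => fst p * u (snd p)).
Definition Igen (c : fm) (E : list fm) (a : R) (ts : list (R * fm)) : R :=
  a * beta u c E + sumf ts (fun p => fst p * beta u (And c (snd p)) E).

Lemma ded_refl x : deduces PT PF x x.
Proof. intros v _ _ h; auto. Qed.

Lemma ded_and w x y : deduces PT PF w (And x y) <-> deduces PT PF w x /\ deduces PT PF w y.
Proof.
  split.
  - intros H; split; intros v h1 h2 h3; specialize (H v h1 h2 h3); simpl in H; apply andb_true_iff in H; tauto.
  - intros [H1 H2] v h1 h2 h3; simpl; apply andb_true_iff; auto.
Qed.

Lemma POSgen ts : forall c E a,
  (forall w, sat PT PF w -> deduces PT PF w c -> (forall e, In e E -> ~ deduces PT PF w e) -> evr (a, ts) w >= 0) ->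
  Igen c E a ts >= 0.
Proof.
  induction ts as [|[c1 p1] ts IH]; intros c E a H.
  - unfold Igen. rewrite sumf_nil. unfold evr in H; simpl in H.
    destruct (Rle_dec 0 a) as [Ha|Ha].
    + specialize (Hb c E). nra.
    + destruct (classic (sat PT PF c /\ forall e, In e E -> ~ deduces PT PF c e)) as [[S1 S2]|NS].
      * specialize (H c S1 (ded_refl c) S2). rewrite sumf_nil in H. lra.
      * destruct (classic (sat PT PF c)) as [S1|S1].
        -- assert (exists e, In e E /\ deduces PT PF c e) as [e [He1 He2]].
           { apply NNPP. intros N. apply NS. split; auto. intros e He Hd. apply N. eauto. }
           rewrite (beta_ded PT PF u Hex E c e); auto. lra.
        -- rewrite (beta_unsat PT PF u Hex HF E c); auto. lra.
  - assert (Eq : Igen c E a ((c1, p1) :: ts) = Igen (And c p1) E (a + c1) ts + Igen c (p1 :: E) a ts).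
    { unfold Igen. rewrite sumf_cons. simpl fst; simpl snd. simpl beta.
      rewrite (sumf_ext ts (fun p => fst p * (beta u (And c (snd p)) E - beta u (And (And c (snd p)) p1) E))
                          (fun p => fst p * beta u (And c (snd p)) E - fst p * beta u (And (And c p1) (snd p)) E)).
      rewrite sumf_minus. ring.
      intros p _. rewrite (beta_equiv PT PF u Hex E (And (And c (snd p)) p1) (And (And c p1) (snd p))). ring.
      apply equiv_of_eval. intros v _ _. simpl. destruct (feval v c), (feval v (snd p)), (feval v p1); auto. }
    rewrite Eq. assert (Igen (And c p1) E (a + c1) ts >= 0 /\ Igen c (p1 :: E) a ts >= 0); [|lra]. split.
    + apply IH. intros w S1 S2 S3. apply ded_and in S2 as [S2 S4].
      specialize (H w S1 S2 S3). unfold evr in *; simpl fst in *; simpl snd in *. rewrite sumf_cons in H.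
      unfold ind at 1 in H. destruct (excluded_middle_informative _); [|contradiction]. simpl in H. lra.
    + apply IH. intros w S1 S2 S3.
      specialize (H w S1 S2 (fun e He => S3 e (or_intror He))). unfold evr in *; simpl fst in *; simpl snd in *.
      rewrite sumf_cons in H.
      unfold ind at 1 in H. destruct (excluded_middle_informative _) as [d|d]; [exfalso; apply (S3 p1); auto; left; auto|]. simpl in H. lra.
Qed.

Lemma POS r : (forall w, sat PT PF w -> evr r w >= 0) -> valr r >= 0.
Proof.
  intros H. destruct r as [a ts].
  pose proof (POSgen ts (Var PT) [] a) as G.
  assert (E1 : Igen (Var PT) [] a ts = valr (a, ts)).
  { unfold Igen, valr. simpl. rewrite HT. f_equal. ring. apply sumf_ext. intros p _. f_equal.
    apply Hex, equiv_of_eval. intros v h1 _. simpl. rewrite h1. auto. }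
  rewrite <- E1. apply G. intros w S1 _ _. auto.
Qed.

Definition Om := { x : fm | sat PT PF x }.
Definition t2 (phi : fm) : Om -> Prop := fun w => deduces PT PF (proj1_sig w) phi.
Definition isrep (r : R * list (R * fm)) (A : Om -> Prop) :=
  forall w : Om, (A w -> evr r (proj1_sig w) = 1) /\ (~ A w -> evr r (proj1_sig w) = 0).
Definition Sig2 (A : Om -> Prop) := exists r, isrep r A.
Definition lam2 (A : Om -> Prop) : R :=
  match excluded_middle_informative (Sig2 A) with
  | left h => valr (proj1_sig (constructive_indefinite_description _ h))
  | right _ => 0 end.

Definition negr (r : R * list (R * fm)) := (- fst r, map (fun p => (- fst p, snd p)) (snd r)).
Definition addr (r r' : R * list (R * fm)) := (fst r + fst r', snd r ++ snd r').
Definition mulr (r r' : R * list (R * fm)) :=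
  (fst r * fst r', map (fun p => (fst r' * fst p, snd p)) (snd r) ++ map (fun q => (fst r * fst q, snd q)) (snd r') ++
     flat_map (fun p => map (fun q => (fst p * fst q, And (snd p) (snd q))) (snd r')) (snd r)).

Lemma evr_neg r w : evr (negr r) w = - evr r w.
Proof. unfold evr, negr. simpl. rewrite sumf_map. simpl. rewrite (sumf_ext _ _ (fun p => -1 * (fst p * ind w (snd p)))) by (intros; ring). rewrite sumf_scal. ring. Qed.
Lemma valr_neg r : valr (negr r) = - valr r.
Proof. unfold valr, negr. simpl. rewrite sumf_map. simpl. rewrite (sumf_ext _ _ (fun p => -1 * (fst p * u (snd p)))) by (intros; ring). rewrite sumf_scal. ring. Qed.
Lemma evr_const a w : evr (a, []) w = a.
Proof. unfold evr. simpl. rewrite sumf_nil. ring. Qed.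
Lemma valr_const a : valr (a, []) = a.
Proof. unfold valr. simpl. rewrite sumf_nil. ring. Qed.
Lemma evr_add r r' w : evr (addr r r') w = evr r w + evr r' w.
Proof. unfold evr, addr. simpl. rewrite sumf_app. ring. Qed.
Lemma valr_add r r' : valr (addr r r') = valr r + valr r'.
Proof. unfold valr, addr. simpl. rewrite sumf_app. ring. Qed.

Lemma ind_and w x y : ind w (And x y) = ind w x * ind w y.
Proof.
  unfold ind. destruct (excluded_middle_informative (deduces PT PF w (And x y))) as [d|d];
  destruct (excluded_middle_informative (deduces PT PF w x)) as [d1|d1];
  destruct (excluded_middle_informative (deduces PT PF w y)) as [d2|d2]; try ring;
  rewrite ded_and in d; tauto.
Qed.

Lemma evr_mul r r' w : evr (mulr r r') w = evr r w * evr r' w.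
Proof.
  unfold evr, mulr. simpl. rewrite !sumf_app, !sumf_map, sumf_flat_map. simpl.
  rewrite (sumf_ext _ (fun p => sumf (map _ (snd r')) _) (fun p => sumf (snd r') (fun q => (fst p * ind w (snd p)) * (fst q * ind w (snd q))))).
  2:{ intros p _. rewrite sumf_map. apply sumf_ext. intros q _. simpl. rewrite ind_and. ring. }
  rewrite <- sumf_mul.
  rewrite (sumf_ext _ (fun p => fst r' * fst p * ind w (snd p)) (fun p => fst r' * (fst p * ind w (snd p)))) by (intros; ring).
  rewrite (sumf_ext (snd r') (fun q => fst r * fst q * ind w (snd q)) (fun q => fst r * (fst q * ind w (snd q)))) by (intros; ring).
  rewrite !sumf_scal. ring.
Qed.

Lemma evr01 r (A : Om -> Prop) (w : Om) : isrep r A -> evr r (proj1_sig w) = 0 \/ evr r (proj1_sig w) = 1.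
Proof. intros H. destruct (H w). destruct (classic (A w)); auto. Qed.

Lemma W r r' A : isrep r A -> isrep r' A -> valr r = valr r'.
Proof.
  intros H1 H2.
  assert (Z : forall x, sat PT PF x -> evr (addr r (negr r')) x = 0).
  { intros x S. set (w := exist _ x S : Om). rewrite evr_add, evr_neg.
    destruct (H1 w), (H2 w). change x with (proj1_sig w). destruct (classic (A w)).
    rewrite H, H3; auto; ring. rewrite H0, H4; auto; ring. }
  pose proof (POS (addr r (negr r'))) as G1. pose proof (POS (negr (addr r (negr r')))) as G2.
  rewrite valr_add, valr_neg in G1. rewrite valr_neg, valr_add, valr_neg in G2.
  assert (valr r + - valr r' >= 0) by (apply G1; intros; rewrite Z; auto; lra).
  assert (- (valr r + - valr r') >= 0) by (apply G2; intros; rewrite evr_neg, Z; auto; lra). lra.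
Qed.

Lemma lam_rep r A : isrep r A -> lam2 A = valr r.
Proof.
  intros H. unfold lam2. destruct (excluded_middle_informative _) as [h|h]; [|exfalso; apply h; exists r; auto].
  destruct (constructive_indefinite_description _ h) as [r' Hr']. simpl. eapply W; eauto.
Qed.

Lemma rep_compl r A : isrep r A -> isrep (addr (1, []) (negr r)) (fun w => ~ A w).
Proof.
  intros H w. rewrite evr_add, evr_neg, evr_const.
  destruct (H w) as [H1 H2]. split; intros HA.
  - rewrite H2; auto. ring.
  - rewrite H1; [ring|]. apply NNPP; auto.
Qed.

Lemma rep_union r r' A B : isrep r A -> isrep r' B ->
  isrep (addr (addr r r') (negr (mulr r r'))) (fun w => A w \/ B w).
Proof.
  intros H H' w. rewrite !evr_add, evr_neg, evr_mul.
  destruct (H w) as [H1 H2]. destruct (H' w) as [H3 H4].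
  destruct (classic (A w)) as [a|a]; destruct (classic (B w)) as [b|b].
  - rewrite H1, H3; auto. split; intros; [ring|tauto].
  - rewrite H1, H4; auto. split; intros; [ring|tauto].
  - rewrite H2, H3; auto. split; intros; [ring|tauto].
  - rewrite H2, H4; auto. split; intros; [tauto|ring].
Qed.

Lemma rep_t phi : isrep (0, [(1, phi)]) (t2 phi).
Proof.
  intros w. unfold evr, t2, ind. simpl. rewrite sumf_cons, sumf_nil. simpl.
  destruct (excluded_middle_informative _); split; intros; try tauto; ring.
Qed.

Lemma lam_t phi : lam2 (t2 phi) = u phi.
Proof. rewrite (lam_rep _ _ (rep_t phi)). unfold valr. simpl. rewrite sumf_cons, sumf_nil. simpl. ring. Qed.

Lemma lam_bounds A : Sig2 A -> 0 <= lam2 A <= 1.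
Proof.
  intros [r H]. rewrite (lam_rep r A H).
  assert (G1 : valr r >= 0).
  { apply POS. intros x S. destruct (evr01 r A (exist _ x S) H) as [E|E]; simpl in E; lra. }
  assert (G2 : valr (addr (1, []) (negr r)) >= 0).
  { apply POS. intros x S. destruct (evr01 _ _ (exist _ x S) (rep_compl r A H)) as [E|E]; simpl in E; lra. }
  rewrite valr_add, valr_neg in G2. unfold valr at 1 in G2. simpl in G2. rewrite sumf_nil in G2. lra.
Qed.

Lemma model2 : subjective_model PT PF Sig2 t2 lam2 /\ additive Sig2 lam2 /\ exact PT PF t2 /\ and_distributive t2 /\
  (fun phi => lam2 (t2 phi)) = u.
Proof.
  assert (R0 : isrep (0, []) (fun _ : Om => False)).
  { intros w. unfold evr. simpl. rewrite sumf_nil. split; intros; [tauto|ring]. }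
  assert (R1 : isrep (1, []) (fun _ : Om => True)).
  { intros w. unfold evr. simpl. rewrite sumf_nil. split; intros; [ring|tauto]. }
  split; [split; [|split; [|split]]|split; [|split; [|split]]].
  - split.
    + apply functional_extensionality; intros w. apply propositional_extensionality. split; auto.
      intros _ v h1 h2 h3; auto.
    + apply functional_extensionality; intros w. apply propositional_extensionality. split; [|tauto].
      intros H. destruct w as [x [v [h1 [h2 h3]]]]. unfold t2 in H; simpl in H. specialize (H v h1 h2 h3).
      simpl in H. congruence.
  - split; [|split].
    + exists (0, []); auto.
    + intros A [r H]. eexists; apply rep_compl; eauto.
    + intros A B [r H] [r' H']. eexists; apply rep_union; eauto.
  - intros phi. eexists; apply rep_t.
  - split; [|split].
    + apply lam_bounds.
    + rewrite (lam_rep _ _ R0). unfold valr; simpl; rewrite sumf_nil; ring.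
    + rewrite (lam_rep _ _ R1). unfold valr; simpl; rewrite sumf_nil; ring.
  - intros A B [r H] [r' H'] D. rewrite (lam_rep (addr r r')), valr_add, (lam_rep r A), (lam_rep r' B); auto.
    intros w. rewrite evr_add. destruct (H w) as [H1 H2]. destruct (H' w) as [H3 H4].
    destruct (classic (A w)) as [a|a]; destruct (classic (B w)) as [b|b].
    + exfalso; eauto.
    + rewrite H1, H4; auto. split; intros; [ring|tauto].
    + rewrite H2, H3; auto. split; intros; [ring|tauto].
    + rewrite H2, H4; auto. split; intros; [tauto|ring].
  - intros phi psi [H1 H2]. apply functional_extensionality; intros w. apply propositional_extensionality.
    unfold t2. split; intros H v h1 h2 h3; eauto.
  - intros phi psi. apply functional_extensionality; intros w. apply propositional_extensionality.
    unfold t2. apply ded_and.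
  - apply functional_extensionality; intros phi. apply lam_t.
Qed.

End Model2.

Lemma sumf_cons_if {A} (b : bool) (x : A) l g : sumf (if b then x :: l else l) g = (if b then g x else 0) + sumf l g.
Proof. destruct b; [apply sumf_cons|simpl; ring]. Qed.

Lemma alt_sum (L : list (list nat)) (g : list nat -> R) :
  sumf (filter (fun I => Nat.ltb 0 (length I)) L) (fun I => (-1) ^ (length I + 1) * g I) =
  sumf (filter (fun I => Nat.odd (length I)) L) g -
  sumf (filter (fun I => andb (Nat.ltb 0 (length I)) (Nat.even (length I))) L) g.
Proof.
  induction L as [|I L IH]; [unfold sumf; simpl; ring|].
  simpl filter. rewrite !sumf_cons_if. destruct (length I) as [|k] eqn:El.
  - replace (Nat.ltb 0 0) with false by reflexivity. replace (Nat.odd 0) with false by reflexivity.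
    cbn [andb]. rewrite IH. ring.
  - replace (Nat.ltb 0 (S k)) with true by reflexivity. cbn [andb]. rewrite IH, pow_m1.
    rewrite <- (Nat.negb_even (S k)).
    replace (S k + 1)%nat with (S (S k)) by lia. rewrite Nat.even_succ_succ.
    rewrite (Nat.even_succ k). rewrite <- (Nat.negb_even k).
    destruct (Nat.even k); cbn [negb]; ring.
Qed.

Lemma fext_iff {X : Type} (A B : X -> Prop) : (forall w, A w <-> B w) -> A = B.
Proof. intros H. apply functional_extensionality; intros w. apply propositional_extensionality. auto. Qed.

Section FieldLemmas.
Context {Omega : Type} (Sigma : (Omega -> Prop) -> Prop) (HS : is_field Sigma).

Lemma S_compl A : Sigma A -> Sigma (fun w => ~ A w).
Proof. apply HS. Qed.
Lemma S_union A B : Sigma A -> Sigma B -> Sigma (fun w => A w \/ B w).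
Proof. apply HS. Qed.
Lemma S_inter A B : Sigma A -> Sigma B -> Sigma (fun w => A w /\ B w).
Proof.
  intros H1 H2. replace (fun w => A w /\ B w) with (fun w => ~ ((fun w => ~ A w) w \/ (fun w => ~ B w) w)).
  apply S_compl, S_union; apply S_compl; auto.
  apply fext_iff. intros w. tauto.
Qed.
Lemma S_diff A B : Sigma A -> Sigma B -> Sigma (fun w => A w /\ ~ B w).
Proof. intros. apply S_inter; auto. apply S_compl; auto. Qed.
Lemma S_bigunion (A : nat -> Omega -> Prop) n : (forall i, (i < n)%nat -> Sigma (A i)) -> Sigma (fun w => exists i, (i < n)%nat /\ A i w).
Proof.
  induction n; intros H.
  - replace (fun w => exists i, (i < 0)%nat /\ A i w) with (fun _ : Omega => False). apply HS.
    apply fext_iff. intros w; split; [tauto|]. intros [i [Hi _]]; lia.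
  - replace (fun w => exists i, (i < S n)%nat /\ A i w) with (fun w => (fun w => exists i, (i < n)%nat /\ A i w) w \/ A n w).
    apply S_union; auto.
    apply fext_iff. intros w; split.
    + intros [[i [Hi Ha]]|Ha]; exists i || exists n; split; auto; lia.
    + intros [i [Hi Ha]]. destruct (Nat.eq_dec i n) as [->|Hne]; [right; auto|left; exists i; split; auto; lia].
Qed.
End FieldLemmas.

Section FromModel2.
Context {P : Type} (PT PF : P) {Omega : Type} (Sigma : (Omega -> Prop) -> Prop)
  (t : form P -> Omega -> Prop) (lam : (Omega -> Prop) -> R)
  (Hsm : subjective_model PT PF Sigma t lam) (Hadd : additive Sigma lam)
  (Hexact : exact PT PF t) (Hand : and_distributive t).

Definition Rg (x : form P) (E : list (form P)) : Omega -> Prop := fun w => t x w /\ forall e, In e E -> ~ t e w.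

Lemma beta_lam E : forall x, Sigma (Rg x E) /\ beta (fun phi => lam (t phi)) x E = lam (Rg x E).
Proof.
  destruct Hsm as [HTV [HF [Ht Hap]]].
  induction E as [|y E IH]; intros x.
  - replace (Rg x []) with (t x) by (apply fext_iff; intros w; unfold Rg; simpl; tauto). auto.
  - destruct (IH x) as [S1 E1]. destruct (IH (And x y)) as [S2 E2].
    assert (Eq1 : Rg x (y :: E) = fun w => Rg x E w /\ ~ t y w).
    { apply fext_iff; intros w; unfold Rg; simpl. split; [intros [h1 h2]; split; [split|]; auto|].
      intros [[h1 h2] h3]. split; auto. intros e [<-|He]; auto. }
    assert (Eq2 : Rg (And x y) E = fun w => Rg x E w /\ t y w).
    { apply fext_iff; intros w; unfold Rg; rewrite Hand. tauto. }
    assert (S3 : Sigma (Rg x (y :: E))) by (rewrite Eq1; apply S_diff; auto).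
    split; auto. simpl. rewrite E1, E2.
    assert (Eq3 : Rg x E = fun w => Rg x (y :: E) w \/ Rg (And x y) E w).
    { rewrite Eq1, Eq2. apply fext_iff; intros w. split; [|tauto]. intros h. destruct (classic (t y w)); tauto. }
    rewrite Eq3 at 1. rewrite Hadd; auto. ring.
    intros w h1 h2. rewrite Eq1 in h1. rewrite Eq2 in h2. tauto.
Qed.

Lemma model2_beta : forall x E, beta (fun phi => lam (t phi)) x E >= 0.
Proof.
  intros x E. destruct (beta_lam E x) as [S1 E1]. rewrite E1.
  destruct Hsm as [_ [_ [_ [Hb _]]]]. specialize (Hb _ S1). lra.
Qed.

Lemma model2_exact : uexact PT PF (fun phi => lam (t phi)).
Proof. intros x y H. rewrite (Hexact x y H). auto. Qed.

End FromModel2.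

Section FromModel3.
Context {P : Type} (PT PF : P) {Omega : Type} (Sigma : (Omega -> Prop) -> Prop)
  (t : form P -> Omega -> Prop) (lam : (Omega -> Prop) -> R)
  (Hsm : subjective_model PT PF Sigma t lam) (Htm : totally_monotone Sigma lam)
  (Hsound : sound PT PF t).

Lemma lam_mono A C : Sigma A -> Sigma C -> (forall w, A w -> C w) -> lam A <= lam C.
Proof.
  intros SA SC Sub. destruct Hsm as [_ [HF [_ [Hb [H0 _]]]]].
  set (A' := fun i : nat => if Nat.eqb i 0 then A else (fun w => C w /\ ~ A w)).
  assert (SD : Sigma (fun w => C w /\ ~ A w)) by (apply S_diff; auto).
  pose proof (Htm 2%nat A') as H.
  assert (HA : forall i, (i < 2)%nat -> Sigma (A' i)) by (intros [|i] _; simpl; auto).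
  specialize (H HA).
  replace (nonempty_subsets 2%nat) with [[1%nat]; [0%nat]; [0%nat; 1%nat]] in H by reflexivity.
  cbn [map sum_list] in H.
  assert (E1 : (fun w => forall i, In i [1%nat] -> A' i w) = (fun w => C w /\ ~ A w)).
  { apply fext_iff; intros w. split; intros h. apply (h 1%nat); left; auto. intros i [<-|[]]; auto. }
  assert (E2 : (fun w => forall i, In i [0%nat] -> A' i w) = A).
  { apply fext_iff; intros w. split; intros h. apply (h 0%nat); left; auto. intros i [<-|[]]; auto. }
  assert (E3 : (fun w => forall i, In i [0%nat; 1%nat] -> A' i w) = (fun _ => False)).
  { apply fext_iff; intros w. split; [|tauto]. intros h. pose proof (h 0%nat) as a. pose proof (h 1%nat) as b.
    simpl in a, b. destruct b; auto. apply H2, a; auto. }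
  assert (E4 : (fun w => exists i, (i < 2)%nat /\ A' i w) = C).
  { apply fext_iff; intros w. split.
    - intros [[|[|i]] [Hi h]]; unfold A' in h; simpl in h; [auto|tauto|lia].
    - intros h. destruct (classic (A w)). exists 0%nat; split; [lia|unfold A'; simpl; auto]. exists 1%nat; split; [lia|unfold A'; simpl; auto]. }
  rewrite E1, E2, E3, E4, H0 in H. specialize (Hb _ SD). simpl in H. lra.
Qed.

Lemma inter_bigand (phi : nat -> form P) I : I <> [] ->
  (fun w => forall i, In i I -> t (phi i) w) = t (bigand PT phi I).
Proof.
  destruct Hsound as [_ [_ [_ Hand]]].
  induction I as [|i I IH]; intros H; [contradiction|]. destruct I as [|j I'].
  - apply fext_iff; intros w. simpl. split; intros h. apply h; auto. intros k [<-|[]]; auto.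
  - change (bigand PT phi (i :: j :: I')) with (And (phi i) (bigand PT phi (j :: I'))). rewrite Hand, <- IH by discriminate.
    apply fext_iff; intros w. split; intros h.
    + split; [apply h; left; auto|]. intros k Hk; apply h; right; auto.
    + destruct h as [h1 h2]. intros k [<-|Hk]; auto.
Qed.

Lemma model3_IEu : IEu PT PF (fun phi => lam (t phi)).
Proof.
  intros n phi psi Hd. destruct Hsm as [HTV [HF [Ht Hap]]]. destruct Hsound as [_ [Hmon _]].
  pose proof (Htm n (fun i => t (phi i)) (fun i _ => Ht (phi i))) as H.
  assert (SU : Sigma (fun w => exists i, (i < n)%nat /\ t (phi i) w)) by (apply S_bigunion; auto).
  assert (M : lam (fun w => exists i, (i < n)%nat /\ t (phi i) w) <= lam (t psi)).
  { apply lam_mono; auto. intros w [i [Hi h]]. eapply Hmon; eauto. }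
  change (sum_list (map ?f ?l)) with (sumf l f) in H. unfold nonempty_subsets in H.
  rewrite (sumf_ext _ _ (fun I => (-1) ^ (length I + 1) * lam (t (bigand PT phi I)))) in H.
  2:{ intros I HI. apply filter_In in HI as [_ HI]. rewrite inter_bigand; auto. destruct I; simpl in HI; discriminate. }
  rewrite alt_sum in H. fold (even_subsets n) (odd_subsets n) in H. lra.
Qed.

End FromModel3.

Section Model3.
Context {P : Type} (PT PF : P).
Notation fm := (form P).
Context (u : fm -> R) (Hex : uexact PT PF u) (HT : u (Var PT) = 1) (HF : u (Var PF) = 0)
        (Hu : forall phi, 0 <= u phi <= 1) (HIE : IEu PT PF u).

Definition Om3 := { v : P -> bool | v PT = true /\ v PF = false }.
Definition t3 (phi : fm) : Om3 -> Prop := fun w => feval (proj1_sig w) phi = true.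
Definition Sig3 (A : Om3 -> Prop) := exists phi, A = t3 phi.
Definition lam3 (A : Om3 -> Prop) : R :=
  match excluded_middle_informative (Sig3 A) with
  | left h => u (proj1_sig (constructive_indefinite_description _ h))
  | right _ => 0 end.

Lemma t3_inj x y : t3 x = t3 y -> equiv PT PF x y.
Proof.
  intros H. apply equiv_of_eval. intros v h1 h2.
  pose proof (equal_f H (exist _ v (conj h1 h2))) as E. unfold t3 in E; simpl in E.
  destruct (feval v x), (feval v y); auto.
  - assert (false = true) by (rewrite <- E; auto). discriminate.
  - assert (false = true) by (rewrite E; auto). discriminate.
Qed.

Lemma lam3_t phi : lam3 (t3 phi) = u phi.
Proof.
  unfold lam3. destruct (excluded_middle_informative _) as [h|h]; [|exfalso; apply h; exists phi; auto].
  destruct (constructive_indefinite_description _ h) as [p Hp]. simpl. apply Hex. apply t3_inj. auto.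
Qed.

Fixpoint bigor (phi : nat -> fm) (n : nat) : fm :=
  match n with 0 => Var PF | S m => Or (bigor phi m) (phi m) end.

Lemma feval_bigor v phi n : v PF = false -> (feval v (bigor phi n) = true <-> exists i, (i < n)%nat /\ feval v (phi i) = true).
Proof.
  intros h. induction n; simpl.
  - rewrite h. split; [discriminate|]. intros [i [Hi _]]; lia.
  - rewrite orb_true_iff, IHn. split.
    + intros [[i [Hi H]]|H]; [exists i|exists n]; split; auto; lia.
    + intros [i [Hi H]]. destruct (Nat.eq_dec i n) as [->|Hne]; [right; auto|left; exists i; split; auto; lia].
Qed.

Lemma model3 : subjective_model PT PF Sig3 t3 lam3 /\ totally_monotone Sig3 lam3 /\ sound PT PF t3 /\
  (fun phi => lam3 (t3 phi)) = u.
Proof.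
  assert (TF : (fun _ : Om3 => False) = t3 (Var PF)).
  { apply fext_iff; intros [v [h1 h2]]. unfold t3; simpl. rewrite h2. split; [tauto|discriminate]. }
  assert (TT : (fun _ : Om3 => True) = t3 (Var PT)).
  { apply fext_iff; intros [v [h1 h2]]. unfold t3; simpl. rewrite h1. tauto. }
  split; [split; [|split; [|split]]|split; [|split]].
  - split; auto.
  - split; [|split].
    + exists (Var PF); auto.
    + intros A [phi ->]. exists (Neg phi). apply fext_iff; intros w. unfold t3; simpl.
      destruct (feval (proj1_sig w) phi); simpl; split; auto; try discriminate; intros H; exfalso; auto.
    + intros A B [phi ->] [psi ->]. exists (Or phi psi). apply fext_iff; intros w. unfold t3; simpl.
      rewrite orb_true_iff; tauto.
  - intros phi; exists phi; auto.
  - split; [|split].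
    + intros A [phi ->]. rewrite lam3_t; auto.
    + rewrite TF, lam3_t; auto.
    + rewrite TT, lam3_t; auto.
  - intros n A HA.
    set (phi := fun i => match excluded_middle_informative (Sig3 (A i)) with
                         | left h => proj1_sig (constructive_indefinite_description _ h)
                         | right _ => Var PT end).
    assert (Hphi : forall i, (i < n)%nat -> A i = t3 (phi i)).
    { intros i Hi. unfold phi. destruct (excluded_middle_informative _) as [h|h]; [|exfalso; apply h; auto].
      destruct (constructive_indefinite_description _ h) as [p Hp]. simpl. auto. }
    assert (EU : (fun w => exists i, (i < n)%nat /\ A i w) = t3 (bigor phi n)).
    { apply fext_iff; intros [v [h1 h2]]. unfold t3 at 1; simpl. rewrite feval_bigor by auto.
      split; intros [i [Hi H]]; exists i; split; auto; rewrite Hphi in *; auto. }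
    rewrite EU, lam3_t.
    change (sum_list (map ?f ?l)) with (sumf l f). unfold nonempty_subsets.
    rewrite (sumf_ext _ _ (fun I => (-1) ^ (length I + 1) * u (bigand PT phi I))).
    2:{ intros I HI. apply filter_In in HI as [HI1 HI2]. f_equal. rewrite <- lam3_t. f_equal.
        apply fext_iff; intros [v [h1 h2]]. unfold t3; simpl. rewrite feval_bigand by auto.
        rewrite forallb_forall. split; intros H i Hi.
        - specialize (H i Hi). rewrite Hphi in H. exact H.
          apply in_seq with (start := 0%nat). eapply subsets_in; eauto.
        - rewrite Hphi. apply H; auto. apply in_seq with (start := 0%nat). eapply subsets_in; eauto. }
    rewrite alt_sum. fold (even_subsets n) (odd_subsets n).
    pose proof (HIE n phi (bigor phi n)) as H.
    assert (Hd : forall i, (i < n)%nat -> deduces PT PF (phi i) (bigor phi n)).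
    { intros i Hi v h1 h2 h3. apply feval_bigor; auto. exists i; auto. }
    specialize (H Hd). lra.
  - split; [|split; [|split]].
    + intros x y H. apply fext_iff; intros [v [h1 h2]]. unfold t3; simpl. destruct H as [H1 H2].
      split; auto.
    + intros x y H [v [h1 h2]]. unfold t3; simpl. auto.
    + intros x. apply fext_iff; intros w. unfold t3; simpl. destruct (feval (proj1_sig w) x); simpl; split;
      auto; try discriminate; intros H; exfalso; auto.
    + intros x y. apply fext_iff; intros w. unfold t3; simpl. rewrite andb_true_iff. tauto.
  - apply functional_extensionality; intros phi. apply lam3_t.
Qed.

End Model3.

Theorem proposition7 (P : Type) (PT PF : P) (HTF : PT <> PF)
    (pref : (form P -> R) -> (form P -> R) -> Prop) :
  (NonTriviality PT PF pref /\ ObjectiveEU pref /\ InclusionExclusion PT PF pref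
   <->
   exists (Omega : Type) (Sigma : (Omega -> Prop) -> Prop)
          (t : form P -> Omega -> Prop) (lam : (Omega -> Prop) -> R),
     subjective_model PT PF Sigma t lam /\ additive Sigma lam /\
     exact PT PF t /\ and_distributive t /\ represents pref t lam)
  /\
  (NonTriviality PT PF pref /\ ObjectiveEU pref /\ InclusionExclusion PT PF pref
   <->
   exists (Omega' : Type) (Sigma' : (Omega' -> Prop) -> Prop)
          (t' : form P -> Omega' -> Prop) (lam' : (Omega' -> Prop) -> R),
     subjective_model PT PF Sigma' t' lam' /\ totally_monotone Sigma' lam' /\
     sound PT PF t' /\ represents pref t' lam').
Proof.
  assert (From1 : NonTriviality PT PF pref /\ ObjectiveEU pref /\ InclusionExclusion PT PF pref ->
     exists u, rep pref u /\ u (Var PT) = 1 /\ u (Var PF) = 0 /\ (forall phi, 0 <= u phi <= 1) /\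
               IEu PT PF u /\ uexact PT PF u).
  { intros [HNT [HEU HIE]]. destruct (vNM PT PF pref HNT HEU) as [u [Hr [HT [HF Hu]]]].
    exists u. assert (HI : IEu PT PF u) by (apply (IE_iff PT PF pref u Hr HF); auto).
    refine (conj Hr (conj HT (conj HF (conj Hu (conj HI _))))).
    intros x y [H1 H2].
    assert (M : forall a b, deduces PT PF a b -> u a <= u b).
    { intros a b Hab. pose proof (HI 1%nat (fun _ => a) b (fun i _ => Hab)) as H.
      replace (even_subsets 1) with (@nil (list nat)) in H by reflexivity.
      replace (odd_subsets 1) with [[0%nat]] in H by reflexivity.
      unfold sumf in H. simpl in H. lra. }
    apply Rle_antisym; apply M; auto. }
  assert (To1 : forall u, rep pref u -> u (Var PT) = 1 -> u (Var PF) = 0 -> (forall phi, 0 <= u phi <= 1) ->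
               IEu PT PF u -> NonTriviality PT PF pref /\ ObjectiveEU pref /\ InclusionExclusion PT PF pref).
  { intros u Hr HT HF Hu HI. destruct (rep_props PT PF pref u Hr HT HF Hu) as [A1 A2].
    split; auto. split; auto. apply (IE_iff PT PF pref u Hr HF); auto. }
  split; split.
  - intros H1. destruct (From1 H1) as [u [Hr [HT [HF [Hu [HI Hex]]]]]].
    pose proof (beta_of_IEu PT PF u Hex HI) as Hb.
    destruct (model2 PT PF u Hex HT HF Hb) as [M1 [M2 [M3 [M4 M5]]]].
    exists (Om PT PF), (Sig2 PT PF), (t2 PT PF), (lam2 PT PF u).
    refine (conj M1 (conj M2 (conj M3 (conj M4 _)))). apply represents_rep. rewrite M5. auto.
  - intros [Omega [Sigma [t [lam [Hsm [Hadd [Hexact [Hand Hrep]]]]]]]].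
    apply represents_rep in Hrep. destruct Hsm as [HTV [HS [Ht Hap]]] eqn:Hsm'.
    destruct HTV as [E1 E2]. destruct Hap as [Hb [L0 L1]].
    apply (To1 (fun phi => lam (t phi))); auto.
    + rewrite E1. auto.
    + rewrite E2. auto.
    + apply (IEu_of_beta PT PF _ (model2_exact PT PF t lam Hexact)).
      exact (model2_beta PT PF Sigma t lam Hsm Hadd Hand).
  - intros H1. destruct (From1 H1) as [u [Hr [HT [HF [Hu [HI Hex]]]]]].
    destruct (model3 PT PF u Hex HT HF Hu HI) as [M1 [M2 [M3 M4]]].
    exists (Om3 PT PF), (Sig3 PT PF), (t3 PT PF), (lam3 PT PF u).
    refine (conj M1 (conj M2 (conj M3 _))). apply represents_rep. rewrite M4. auto.
  - intros [Omega [Sigma [t [lam [Hsm [Htm [Hsound Hrep]]]]]]].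
    apply represents_rep in Hrep. destruct Hsm as [HTV [HS [Ht Hap]]] eqn:Hsm'.
    destruct HTV as [E1 E2]. destruct Hap as [Hb [L0 L1]].
    apply (To1 (fun phi => lam (t phi))); auto.
    + rewrite E1. auto.
    + rewrite E2. auto.
    + exact (model3_IEu PT PF Sigma t lam Hsm Htm Hsound).
Qed.
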